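(* Let $\Gamma\in(0,1)$, $\lambda>0$, $\alpha,\sigma\ge 0$, and let the thresholds be uniform on $[0,1]$. For each $N$ (large enough that $\lambda\max(\alpha,\sigma)\le N$ and $\Gamma N/(N-1)<1$), let $(B^N(t),D^N(t),X^N(t),Y^N(t))_{t\ge0}$ be the scaled HILT-SI Markov chain described in the context, with $B^N(0)=0$, $X^N(0)\le D^N(0)$, $Y^N(0)\le N-D^N(0)$, and $D^N(0)/N\to d_0$, $X^N(0)/N\to x_0$, $Y^N(0)/N\to y_0$, where $0<d_0\le1$, $0\le x_0\le d_0$, $0\le y_0\le 1-d_0$. Write $\tilde B^N=B^N/N$, $\tilde D^N=D^N/N$, $\tilde X^N=X^N/N$, $\tilde Y^N=Y^N/N$. Then for every $T>0$ and $\epsilon>0$, $$\mathbb{P}\Big(\sup_{0\le u\le T}\big\|(\tilde B^N,\tilde D^N,\tilde X^N,\tilde Y^N)(\lfloor Nu\rfloor)-(b(u),d(u),x(u),y(u))\big\|>\epsilon\Big)\xrightarrow{N\to\infty}0,$$ where, with $a=b+d$, $(b,d,x,y)$ is the unique solution of $$\dot b=d,\quad \dot d=\frac{\Gamma d}{1-\Gamma b}(1-b-d)-d,\quad \dot x=\lambda\alpha(x+y)(a-x)+\frac{\Gamma d}{1-\Gamma b}y,\quad \dot y=\lambda\sigma(x+y)(1-a-y)-\frac{\Gamma d}{1-\Gamma b}y,$$ with $b(0)=0$, $d(0)=d_0$, $x(0)=x_0$, $y(0)=y_0$.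
   Context: Scaled HILT-SI chain with $N$ nodes and $\gamma_N=\Gamma/(N-1)$. Each node is either a destination (interested) or a relay (not interested), and either has or does not have the content; destinations are further either infectious or non-infectious. $B^N(t)$, $D^N(t)$ are the numbers of non-infectious and infectious destinations, $A^N(t)=B^N(t)+D^N(t)$, $X^N(t)$ is the number of destinations having the content, $Y^N(t)$ the number of relays having the content. Transition from minislot $t$ to $t+1$, given $B^N(t)=j$, $D^N(t)=m$, $X^N(t)+Y^N(t)=s$: (i) each infectious destination independently, with probability $1/N$, becomes non-infectious; let $C$ be their number; (ii) given $C=c$, each node that is a relay at time $t$ independently becomes an infectious destination with probability $\gamma_N c/(1-\gamma_N j)$; (iii) independently of (i)–(ii), each node without the content that is a destination at time $t$ obtains the content with probability $\lambda\alpha s/N^2$, and each node without the content that is a relay at time $t$ obtains it with probability $\lambda\sigma s/N^2$; content is never lost. Then $B^N(t+1)=j+c$, $D^N(t+1)=m-c+(\text{number of relays converted in (ii)})$, and $X^N(t+1)$, $Y^N(t+1)$ are the resulting numbers of destinations, respectively relays, having the content. *)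

(* Defs.v *)
From Stdlib Require Import Reals Lia ClassicalEpsilon.
Open Scope R_scope.

Definition binom_pmf (n k : nat) (p : R) : R :=
  if (k <=? n)%nat then C n k * p ^ k * (1 - p) ^ (n - k) else 0.

Definition fsum (n : nat) (f : nat -> R) : R := sum_f_R0 f n.

(* State (B, D, X, Y) of the HILT-SI chain. *)
Definition state := (nat * nat * nat * nat)%type.

(* One-step transition operator of the scaled HILT-SI chain with N nodes:
   hilt_step ... N f z = E[ f(Z(t+1)) | Z(t) = z ].
   Decomposition of the transition (i)-(iii):
   c  ~ Bin(m, 1/N)                  infectious -> non-infectious
   q  = gamma_N c / (1 - gamma_N j)  conversion prob. of each relay
   R1 ~ Bin(y, q)                    relays WITH content that convert
   K  ~ Bin(r - y, q)                relays WITHOUT content that convert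
   K1 ~ Bin(K, p_r)                  of those, the ones obtaining content
   L  ~ Bin(r - y - K, p_r)          non-converting relays w/o content obtaining it
   G  ~ Bin(a - x, p_d)              destinations w/o content obtaining it
   (all independent, which is equivalent to the description in the paper). *)
Definition hilt_step (Gam lam alpha sigma : R) (N : nat)
    (f : state -> R) (z : state) : R :=
  let '(j, m, x, y) := z in
  let NR := INR N in
  let gam := Gam / (NR - 1) in
  let a := (j + m)%nat in
  let r := (N - a)%nat in
  let s := INR (x + y) in
  let pd := lam * alpha * s / (NR ^ 2) in
  let pr := lam * sigma * s / (NR ^ 2) in
  fsum m (fun c =>
   binom_pmf m c (/ NR) *
   (let q := gam * INR c / (1 - gam * INR j) in
    fsum y (fun R1 => binom_pmf y R1 q *
    fsum (r - y) (fun K => binom_pmf (r - y) K q *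
    fsum K (fun K1 => binom_pmf K K1 pr *
    fsum (r - y - K) (fun L => binom_pmf (r - y - K) L pr *
    fsum (a - x) (fun G => binom_pmf (a - x) G pd *
      f ((j + c)%nat, (m - c + R1 + K)%nat,
         (x + G + R1 + K1)%nat, (y - R1 + L)%nat)))))))).

(* Probability, starting from state z at time t, that the chain (driven by
   the transition operator step) visits the set bad within the times
   t, t+1, ..., t+n  (bad may depend on time). *)
Fixpoint hit_prob (step : (state -> R) -> state -> R)
    (bad : nat -> state -> Prop) (n t : nat) (z : state) : R :=
  if excluded_middle_informative (bad t z) then 1 else
  match n with
  | O => 0
  | S n' => step (hit_prob step bad n' (S t)) z
  end.

Definition dev (N : nat) (z : state) (b d x y : R -> R) (u : R) : R :=
  let '(B, D, X, Y) := z in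
  let NR := INR N in
  Rmax (Rmax (Rabs (INR B / NR - b u)) (Rabs (INR D / NR - d u)))
       (Rmax (Rabs (INR X / NR - x u)) (Rabs (INR Y / NR - y u))).

Definition bad_at (N : nat) (T eps : R) (b d x y : R -> R) (t : nat) (z : state) : Prop :=
  exists u, 0 <= u <= T /\ Int_part (INR N * u) = Z.of_nat t /\
            dev N z b d x y u > eps.

(* P( sup_{0<=u<=T} || Z~^N(floor(N u)) - (b,d,x,y)(u) || > eps ) for the
   chain started at (0, D0, X0, Y0). *)
Definition dev_prob (Gam lam alpha sigma : R) (N : nat) (D0 X0 Y0 : nat)
    (T eps : R) (b d x y : R -> R) : R :=
  hit_prob (hilt_step Gam lam alpha sigma N) (bad_at N T eps b d x y)
           (Z.to_nat (Int_part (INR N * T))) 0 (0%nat, D0, X0, Y0).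

(* Main.v *)
Require Import Defs.
From Stdlib Require Import Reals Lra Lia Psatz ClassicalEpsilon Classical Arith ZArith.
Open Scope R_scope.

Definition E (n : nat) (p : R) (g : nat -> R) : R :=
  fsum n (fun k => binom_pmf n k p * g k).

Lemma E_ext n p g h : (forall k, (k <= n)%nat -> g k = h k) -> E n p g = E n p h.
Proof. intros H. unfold E, fsum. apply sum_eq. intros i Hi. rewrite H; auto. Qed.

Lemma binom_pmf_nonneg n k p : 0 <= p <= 1 -> 0 <= binom_pmf n k p.
Proof.
  intros Hp. unfold binom_pmf. destruct (k <=? n)%nat; [|lra].
  apply Rmult_le_pos; [apply Rmult_le_pos|].
  - unfold C. apply Rmult_le_pos; [apply pos_INR|].
    apply Rlt_le, Rinv_0_lt_compat, Rmult_lt_0_compat; apply lt_0_INR, lt_O_fact.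
  - apply pow_le; lra.
  - apply pow_le; lra.
Qed.

Lemma E_le n p g h : 0 <= p <= 1 -> (forall k, (k <= n)%nat -> g k <= h k) -> E n p g <= E n p h.
Proof.
  intros Hp H. unfold E, fsum. apply sum_Rle. intros i Hi.
  apply Rmult_le_compat_l; [apply binom_pmf_nonneg; auto| auto].
Qed.

Lemma E_plus n p g h : E n p (fun k => g k + h k) = E n p g + E n p h.
Proof. unfold E, fsum. rewrite <- plus_sum. apply sum_eq. intros; ring. Qed.

Lemma E_scal n p a g : E n p (fun k => a * g k) = a * E n p g.
Proof. unfold E, fsum. rewrite scal_sum. apply sum_eq. intros; ring. Qed.

Lemma sum_last (f : nat -> R) n : sum_f_R0 f (S n) = sum_f_R0 f n + f (S n).
Proof. reflexivity. Qed.

Lemma fact_INR_pos n : 0 < INR (fact n).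
Proof. apply lt_0_INR, lt_O_fact. Qed.

Lemma C_n_n' n : C n n = 1.
Proof. unfold C. rewrite Nat.sub_diag. simpl. field. pose proof (fact_INR_pos n). lra. Qed.

Lemma C_n_0' n : C n 0 = 1.
Proof. unfold C. rewrite Nat.sub_0_r. simpl. field. pose proof (fact_INR_pos n). lra. Qed.

Lemma binom_rec0 n p : binom_pmf (S n) 0 p = (1 - p) * binom_pmf n 0 p.
Proof. unfold binom_pmf. simpl. rewrite !C_n_0'. rewrite Nat.sub_0_r. ring. Qed.

Lemma binom_recS n k p :
  binom_pmf (S n) (S k) p = p * binom_pmf n k p + (1 - p) * binom_pmf n (S k) p.
Proof.
  unfold binom_pmf.
  destruct (Nat.lt_trichotomy k n) as [Hlt|[Heq|Hgt]].
  - assert (E1 : (S k <=? S n)%nat = true) by (apply Nat.leb_le; lia).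
    assert (E2 : (k <=? n)%nat = true) by (apply Nat.leb_le; lia).
    assert (E3 : (S k <=? n)%nat = true) by (apply Nat.leb_le; lia).
    rewrite E1, E2, E3. rewrite <- pascal by lia.
    replace (S n - S k)%nat with (S (n - S k)) by lia.
    replace (n - k)%nat with (S (n - S k)) by lia.
    simpl. ring.
  - subst. rewrite Nat.leb_refl.
    assert (E3 : (S n <=? n)%nat = false) by (apply Nat.leb_gt; lia).
    rewrite E3. rewrite !Nat.sub_diag, !C_n_n'. rewrite Nat.leb_refl. simpl. ring.
  - assert (E1 : (S k <=? S n)%nat = false) by (apply Nat.leb_gt; lia).
    assert (E2 : (k <=? n)%nat = false) by (apply Nat.leb_gt; lia).
    assert (E3 : (S k <=? n)%nat = false) by (apply Nat.leb_gt; lia).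
    rewrite E1, E2, E3. ring.
Qed.

Lemma binom_out n p : binom_pmf n (S n) p = 0.
Proof. unfold binom_pmf. assert (E3 : (S n <=? n)%nat = false) by (apply Nat.leb_gt; lia). rewrite E3; ring. Qed.

Lemma E_rec n p g : E (S n) p g = (1 - p) * E n p g + p * E n p (fun k => g (S k)).
Proof.
  unfold E, fsum.
  rewrite decomp_sum by lia. simpl pred.
  rewrite binom_rec0.
  transitivity ((1 - p) * binom_pmf n 0 p * g 0%nat +
     sum_f_R0 (fun i => p * (binom_pmf n i p * g (S i)) + (1-p) * (binom_pmf n (S i) p * g (S i))) n).
  { f_equal. apply sum_eq. intros i Hi. rewrite binom_recS. ring. }
  rewrite plus_sum.
  replace (sum_f_R0 (fun i => p * (binom_pmf n i p * g (S i))) n) with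
    (p * sum_f_R0 (fun i => binom_pmf n i p * g (S i)) n) by (rewrite scal_sum; apply sum_eq; intros; ring).
  replace (sum_f_R0 (fun i => (1-p) * (binom_pmf n (S i) p * g (S i))) n) with
    ((1-p) * sum_f_R0 (fun i => binom_pmf n (S i) p * g (S i)) n) by (rewrite scal_sum; apply sum_eq; intros; ring).
  destruct n as [|n].
  - simpl. rewrite binom_out. ring.
  - rewrite (decomp_sum (fun k => binom_pmf (S n) k p * g k)) by lia. simpl pred.
    rewrite (sum_last (fun i => binom_pmf (S n) (S i) p * g (S i))). rewrite binom_out. ring.
Qed.

Lemma E_0 p g : E 0 p g = g 0%nat.
Proof. unfold E, fsum, binom_pmf. simpl. unfold C. simpl. field. Qed.

Lemma E_const n p c : E n p (fun _ => c) = c.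
Proof. induction n. - apply E_0. - rewrite E_rec. cbv beta. rewrite IHn. ring. Qed.

Lemma E_id n p : E n p (fun k => INR k) = INR n * p.
Proof.
  induction n. - rewrite E_0. simpl; ring.
  - rewrite E_rec, IHn.
    rewrite (E_ext _ _ (fun k => INR (S k)) (fun k => INR k + 1)) by (intros; rewrite S_INR; ring).
    rewrite E_plus. change (E n p INR) with (E n p (fun k => INR k)). rewrite IHn, E_const. rewrite S_INR. ring.
Qed.

Lemma E_id' n p : E n p INR = INR n * p.
Proof. exact (E_id n p). Qed.

Lemma E_sq n p : E n p (fun k => INR k ^ 2) = INR n * p * (1 - p) + (INR n * p) ^ 2.
Proof.
  induction n. - rewrite E_0. simpl; ring.
  - rewrite E_rec, IHn.
    rewrite (E_ext _ _ (fun k => INR (S k) ^ 2) (fun k => INR k ^ 2 + (2 * INR k + 1))) by (intros; rewrite S_INR; ring).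
    rewrite E_plus, IHn, E_plus, E_scal, E_const. rewrite ?E_id, ?E_id'. rewrite S_INR. ring.
Qed.

Lemma E_sq_le n p : 0 <= p <= 1 -> E n p (fun k => INR k ^ 2) <= INR n * p + (INR n * p) ^ 2.
Proof.
  intros Hp. rewrite E_sq. pose proof (pos_INR n). nra.
Qed.

Lemma E_affine n p a b : E n p (fun k => a + b * INR k) = a + b * (INR n * p).
Proof. rewrite E_plus, E_scal, E_const, E_id. ring. Qed.

Definition gm (Gam : R) (N : nat) := Gam / (INR N - 1).
Definition qc (Gam : R) (N j c : nat) := gm Gam N * INR c / (1 - gm Gam N * INR j).
Definition pp (l : R) (N x y : nat) := l * INR (x + y) / (INR N ^ 2).

Definition nestedE (Gam lam alpha sigma : R) (N j m x y : nat)
  (P : nat -> nat -> nat -> nat -> nat -> nat -> R) : R :=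
  E m (/ INR N) (fun c =>
   E y (qc Gam N j c) (fun R1 =>
   E (N - (j + m) - y) (qc Gam N j c) (fun K =>
   E K (pp (lam * sigma) N x y) (fun K1 =>
   E (N - (j + m) - y - K) (pp (lam * sigma) N x y) (fun L =>
   E ((j + m) - x) (pp (lam * alpha) N x y) (fun G => P c R1 K K1 L G)))))).

Definition newst (j m x y c R1 K K1 L G : nat) : state :=
  ((j + c)%nat, (m - c + R1 + K)%nat, (x + G + R1 + K1)%nat, (y - R1 + L)%nat).

Lemma step_nested Gam lam alpha sigma N j m x y f :
  hilt_step Gam lam alpha sigma N f (j, m, x, y) =
  nestedE Gam lam alpha sigma N j m x y (fun c R1 K K1 L G => f (newst j m x y c R1 K K1 L G)).
Proof.
  unfold hilt_step, nestedE, E, newst, qc, pp, gm. reflexivity.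
Qed.

Definition Inv (N : nat) (z : state) : Prop :=
  let '(j, m, x, y) := z in (j + m <= N /\ x <= j + m /\ y <= N - (j + m))%nat.

Definition good (Gam lam alpha sigma : R) (N : nat) : Prop :=
  (2 <= N)%nat /\ Gam * INR N / (INR N - 1) <= (1 + Gam) / 2 /\
  lam * alpha <= INR N /\ lam * sigma <= INR N.

Definition params (Gam lam alpha sigma : R) : Prop :=
  0 < Gam < 1 /\ 0 < lam /\ 0 <= alpha /\ 0 <= sigma.

Lemma good_N Gam lam alpha sigma N : good Gam lam alpha sigma N -> 2 <= INR N.
Proof. intros [H _]. apply le_INR in H. simpl in H. lra. Qed.

Lemma gm_facts Gam lam alpha sigma N : params Gam lam alpha sigma -> good Gam lam alpha sigma N ->
  0 < gm Gam N /\ gm Gam N * INR N <= (1 + Gam) / 2.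
Proof.
  intros [HG _] Hg. pose proof (good_N _ _ _ _ _ Hg) as HN. destruct Hg as [_ [H2 _]].
  unfold gm. split.
  - apply Rdiv_lt_0_compat; lra.
  - unfold Rdiv in *. replace (Gam * / (INR N - 1) * INR N) with (Gam * INR N * / (INR N - 1)) by ring. lra.
Qed.

Lemma den_pos Gam lam alpha sigma N j : params Gam lam alpha sigma -> good Gam lam alpha sigma N ->
  (j <= N)%nat -> (1 - Gam) / 2 <= 1 - gm Gam N * INR j.
Proof.
  intros Hp Hg Hj. destruct (gm_facts _ _ _ _ _ Hp Hg) as [H1 H2].
  apply le_INR in Hj. destruct Hp as [HG _].
  assert (gm Gam N * INR j <= gm Gam N * INR N) by (apply Rmult_le_compat_l; lra). lra.
Qed.

Lemma qc_range Gam lam alpha sigma N j c : params Gam lam alpha sigma -> good Gam lam alpha sigma N ->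
  (j + c <= N)%nat -> 0 <= qc Gam N j c <= 1.
Proof.
  intros Hp Hg Hjc. pose proof (den_pos Gam lam alpha sigma N j Hp Hg ltac:(lia)) as Hd.
  destruct (gm_facts _ _ _ _ _ Hp Hg) as [H1 H2]. destruct Hp as [HG _].
  apply le_INR in Hjc. rewrite plus_INR in Hjc.
  pose proof (pos_INR c). pose proof (pos_INR j).
  unfold qc. split.
  - apply Rmult_le_pos; [apply Rmult_le_pos; lra|]. apply Rlt_le, Rinv_0_lt_compat; lra.
  - apply Rmult_le_reg_r with (1 - gm Gam N * INR j); [lra|].
    unfold Rdiv. rewrite Rmult_assoc, Rinv_l by lra.
    assert (gm Gam N * (INR j + INR c) <= gm Gam N * INR N) by (apply Rmult_le_compat_l; lra). nra.
Qed.

Lemma pp_range Gam lam alpha sigma N x y l : params Gam lam alpha sigma -> good Gam lam alpha sigma N ->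
  0 <= l -> l <= INR N -> (x + y <= N)%nat -> 0 <= pp l N x y <= l / INR N /\ pp l N x y <= 1.
Proof.
  intros Hp Hg Hl HlN Hxy. pose proof (good_N _ _ _ _ _ Hg) as HN.
  apply le_INR in Hxy. pose proof (pos_INR (x + y)).
  unfold pp. assert (0 < INR N ^ 2) by nra.
  assert (0 <= l * INR (x + y) / INR N ^ 2).
  { apply Rmult_le_pos; [nra|]. apply Rlt_le, Rinv_0_lt_compat; lra. }
  assert (l * INR (x + y) / INR N ^ 2 <= l / INR N).
  { apply Rmult_le_reg_r with (INR N ^ 2); [lra|]. unfold Rdiv.
    rewrite Rmult_assoc, Rinv_l by lra. field_simplify; [|lra]. simpl. nra. }
  assert (l / INR N <= 1).
  { apply Rmult_le_reg_r with (INR N); [lra|]. unfold Rdiv. rewrite Rmult_assoc, Rinv_l by lra. lra. }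
  lra.
Qed.

Lemma invN_range N : (1 <= N)%nat -> 0 <= / INR N <= 1.
Proof.
  intros H. apply le_INR in H. simpl in H. split.
  - apply Rlt_le, Rinv_0_lt_compat; lra.
  - rewrite <- Rinv_1. apply Rinv_le_contravar; lra.
Qed.

Lemma nestedE_le Gam lam alpha sigma N j m x y P Q :
  params Gam lam alpha sigma -> good Gam lam alpha sigma N -> Inv N (j, m, x, y) ->
  (forall c R1 K K1 L G, (c <= m)%nat -> (R1 <= y)%nat -> (K <= N - (j + m) - y)%nat ->
     (K1 <= K)%nat -> (L <= N - (j + m) - y - K)%nat -> (G <= (j + m) - x)%nat ->
     P c R1 K K1 L G <= Q c R1 K K1 L G) ->
  nestedE Gam lam alpha sigma N j m x y P <= nestedE Gam lam alpha sigma N j m x y Q.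
Proof.
  intros Hp Hg HI H. simpl in HI.
  pose proof Hp as Hp'. destruct Hp' as [HG [Hl [Ha Hs]]].
  pose proof Hg as Hg'. destruct Hg' as [HN2 [_ [Hla Hls]]].
  assert (Hxy : (x + y <= N)%nat) by lia.
  destruct (pp_range Gam lam alpha sigma N x y (lam*sigma) Hp Hg ltac:(nra) Hls Hxy) as [[Hs1 _] Hs2].
  destruct (pp_range Gam lam alpha sigma N x y (lam*alpha) Hp Hg ltac:(nra) Hla Hxy) as [[Ha1 _] Ha2].
  unfold nestedE. apply E_le; [apply invN_range; lia|]. intros c Hc.
  pose proof (qc_range Gam lam alpha sigma N j c Hp Hg ltac:(lia)) as Hq.
  apply E_le; auto. intros R1 HR1.
  apply E_le; auto. intros K HK.
  apply E_le; [lra|]. intros K1 HK1.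
  apply E_le; [lra|]. intros L HL.
  apply E_le; [lra|]. intros G HG'.
  apply H; auto.
Qed.

Lemma newst_Inv N j m x y c R1 K K1 L G : Inv N (j, m, x, y) ->
  (c <= m)%nat -> (R1 <= y)%nat -> (K <= N - (j + m) - y)%nat ->
  (K1 <= K)%nat -> (L <= N - (j + m) - y - K)%nat -> (G <= (j + m) - x)%nat ->
  Inv N (newst j m x y c R1 K K1 L G).
Proof. unfold Inv, newst. intros. lia. Qed.

Lemma step_le Gam lam alpha sigma N z f g :
  params Gam lam alpha sigma -> good Gam lam alpha sigma N -> Inv N z ->
  (forall s, Inv N s -> f s <= g s) ->
  hilt_step Gam lam alpha sigma N f z <= hilt_step Gam lam alpha sigma N g z.
Proof.
  intros Hp Hg HI H. destruct z as [[[j m] x] y].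
  rewrite !step_nested. apply nestedE_le; auto.
  intros. apply H. apply newst_Inv; auto.
Qed.

Lemma nestedE_const Gam lam alpha sigma N j m x y a :
  nestedE Gam lam alpha sigma N j m x y (fun _ _ _ _ _ _ => a) = a.
Proof.
  unfold nestedE.
  erewrite E_ext; [apply E_const|]. intros c _. simpl.
  erewrite E_ext; [apply E_const|]. intros R1 _. simpl.
  erewrite E_ext; [apply E_const|]. intros K _. simpl.
  erewrite E_ext; [apply E_const|]. intros K1 _. simpl.
  erewrite E_ext; [apply E_const|]. intros L _. simpl.
  apply E_const.
Qed.

Lemma nestedE_plus Gam lam alpha sigma N j m x y P Q :
  nestedE Gam lam alpha sigma N j m x y (fun c R1 K K1 L G => P c R1 K K1 L G + Q c R1 K K1 L G) =
  nestedE Gam lam alpha sigma N j m x y P + nestedE Gam lam alpha sigma N j m x y Q.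
Proof.
  unfold nestedE. rewrite <- E_plus. apply E_ext; intros c _.
  rewrite <- E_plus. apply E_ext; intros R1 _.
  rewrite <- E_plus. apply E_ext; intros K _.
  rewrite <- E_plus. apply E_ext; intros K1 _.
  rewrite <- E_plus. apply E_ext; intros L _.
  rewrite <- E_plus. apply E_ext; intros G _. reflexivity.
Qed.

Lemma nestedE_scal Gam lam alpha sigma N j m x y a P :
  nestedE Gam lam alpha sigma N j m x y (fun c R1 K K1 L G => a * P c R1 K K1 L G) =
  a * nestedE Gam lam alpha sigma N j m x y P.
Proof.
  unfold nestedE. rewrite <- E_scal. apply E_ext; intros c _.
  rewrite <- E_scal. apply E_ext; intros R1 _.
  rewrite <- E_scal. apply E_ext; intros K _.
  rewrite <- E_scal. apply E_ext; intros K1 _.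
  rewrite <- E_scal. apply E_ext; intros L _.
  rewrite <- E_scal. apply E_ext; intros G _. reflexivity.
Qed.

Lemma nestedE_ext Gam lam alpha sigma N j m x y P Q :
  (forall c R1 K K1 L G, (c <= m)%nat -> (R1 <= y)%nat -> (K <= N - (j + m) - y)%nat ->
     (K1 <= K)%nat -> (L <= N - (j + m) - y - K)%nat -> (G <= (j + m) - x)%nat ->
     P c R1 K K1 L G = Q c R1 K K1 L G) ->
  nestedE Gam lam alpha sigma N j m x y P = nestedE Gam lam alpha sigma N j m x y Q.
Proof.
  intros H. unfold nestedE.
  apply E_ext; intros c Hc. apply E_ext; intros R1 HR1. apply E_ext; intros K HK.
  apply E_ext; intros K1 HK1. apply E_ext; intros L HL. apply E_ext; intros G HG. auto.
Qed.

Lemma step_const Gam lam alpha sigma N z a :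
  hilt_step Gam lam alpha sigma N (fun _ => a) z = a.
Proof. destruct z as [[[j m] x] y]. rewrite step_nested. apply nestedE_const. Qed.

Lemma step_plus_const Gam lam alpha sigma N z f a :
  hilt_step Gam lam alpha sigma N (fun s => f s + a) z = hilt_step Gam lam alpha sigma N f z + a.
Proof.
  destruct z as [[[j m] x] y]. rewrite !step_nested.
  rewrite (nestedE_plus _ _ _ _ _ _ _ _ _ (fun c R1 K K1 L G => f (newst j m x y c R1 K K1 L G)) (fun _ _ _ _ _ _ => a)).
  rewrite nestedE_const. reflexivity.
Qed.

Ltac collapse := 
  first [ apply E_const
        | erewrite E_ext; [apply E_const|]; intros ? _; cbv beta; collapse ].

Ltac skip1 := erewrite E_ext; [apply E_const|]; intros ? _; cbv beta.

Lemma coll_c Gam lam alpha sigma N j m x y f :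
  nestedE Gam lam alpha sigma N j m x y (fun c _ _ _ _ _ => f c) = E m (/ INR N) f.
Proof. unfold nestedE. apply E_ext; intros c _. collapse. Qed.

Lemma coll_R1 Gam lam alpha sigma N j m x y f :
  nestedE Gam lam alpha sigma N j m x y (fun c R1 _ _ _ _ => f c R1) =
  E m (/ INR N) (fun c => E y (qc Gam N j c) (fun R1 => f c R1)).
Proof. unfold nestedE. apply E_ext; intros c _. apply E_ext; intros R1 _. collapse. Qed.

Lemma coll_K Gam lam alpha sigma N j m x y f :
  nestedE Gam lam alpha sigma N j m x y (fun c _ K _ _ _ => f c K) =
  E m (/ INR N) (fun c => E (N - (j + m) - y) (qc Gam N j c) (fun K => f c K)).
Proof. unfold nestedE. apply E_ext; intros c _. skip1. apply E_ext; intros K _. collapse. Qed.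

Lemma coll_K1 Gam lam alpha sigma N j m x y f :
  nestedE Gam lam alpha sigma N j m x y (fun c _ K K1 _ _ => f c K K1) =
  E m (/ INR N) (fun c => E (N - (j + m) - y) (qc Gam N j c) (fun K =>
     E K (pp (lam * sigma) N x y) (fun K1 => f c K K1))).
Proof. unfold nestedE. apply E_ext; intros c _. skip1. apply E_ext; intros K _.
  apply E_ext; intros K1 _. collapse. Qed.

Lemma coll_L Gam lam alpha sigma N j m x y f :
  nestedE Gam lam alpha sigma N j m x y (fun c _ K _ L _ => f c K L) =
  E m (/ INR N) (fun c => E (N - (j + m) - y) (qc Gam N j c) (fun K =>
     E (N - (j + m) - y - K) (pp (lam * sigma) N x y) (fun L => f c K L))).
Proof. unfold nestedE. apply E_ext; intros c _. skip1. apply E_ext; intros K _.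
  skip1. apply E_ext; intros L _. collapse. Qed.

Lemma coll_G Gam lam alpha sigma N j m x y f :
  nestedE Gam lam alpha sigma N j m x y (fun _ _ _ _ _ G => f G) =
  E ((j + m) - x) (pp (lam * alpha) N x y) f.
Proof. unfold nestedE. skip1. skip1. skip1. skip1. skip1. reflexivity. Qed.

Definition kap Gam N j := gm Gam N / (1 - gm Gam N * INR j).
Lemma qc_eq Gam N j c : qc Gam N j c = kap Gam N j * INR c.
Proof. unfold qc, kap, Rdiv. ring. Qed.



Lemma m_c Gam lam alpha sigma N j m x y :
  nestedE Gam lam alpha sigma N j m x y (fun c _ _ _ _ _ => INR c) = INR m * / INR N.
Proof. rewrite coll_c. apply E_id. Qed.

Lemma m_R1 Gam lam alpha sigma N j m x y :
  nestedE Gam lam alpha sigma N j m x y (fun _ R1 _ _ _ _ => INR R1) =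
  INR y * kap Gam N j * (INR m * / INR N).
Proof.
  rewrite (coll_R1 _ _ _ _ _ _ _ _ _ (fun _ R1 => INR R1)).
  rewrite (E_ext _ _ _ (fun c => INR y * kap Gam N j * INR c)).
  - rewrite E_scal, E_id. ring.
  - intros c _. rewrite E_id, qc_eq. ring.
Qed.

Lemma m_K Gam lam alpha sigma N j m x y :
  nestedE Gam lam alpha sigma N j m x y (fun _ _ K _ _ _ => INR K) =
  INR (N - (j + m) - y) * kap Gam N j * (INR m * / INR N).
Proof.
  rewrite (coll_K _ _ _ _ _ _ _ _ _ (fun _ K => INR K)).
  rewrite (E_ext _ _ _ (fun c => INR (N - (j + m) - y) * kap Gam N j * INR c)).
  - rewrite E_scal, E_id. ring.
  - intros c _. rewrite E_id, qc_eq. ring.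
Qed.

Lemma m_K1 Gam lam alpha sigma N j m x y :
  nestedE Gam lam alpha sigma N j m x y (fun _ _ _ K1 _ _ => INR K1) =
  INR (N - (j + m) - y) * kap Gam N j * (INR m * / INR N) * pp (lam * sigma) N x y.
Proof.
  rewrite (coll_K1 _ _ _ _ _ _ _ _ _ (fun _ _ K1 => INR K1)).
  rewrite (E_ext _ _ _ (fun c => INR (N - (j + m) - y) * kap Gam N j * pp (lam * sigma) N x y * INR c)).
  - rewrite E_scal, E_id. ring.
  - intros c _.
    rewrite (E_ext _ _ _ (fun K => pp (lam * sigma) N x y * INR K)).
    + rewrite E_scal, E_id, qc_eq. ring.
    + intros K _. rewrite E_id. ring.
Qed.

Lemma m_G Gam lam alpha sigma N j m x y :
  nestedE Gam lam alpha sigma N j m x y (fun _ _ _ _ _ G => INR G) =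
  INR ((j + m) - x) * pp (lam * alpha) N x y.
Proof. rewrite (coll_G _ _ _ _ _ _ _ _ _ (fun G => INR G)). apply E_id. Qed.

Lemma m_L Gam lam alpha sigma N j m x y :
  nestedE Gam lam alpha sigma N j m x y (fun _ _ _ _ L _ => INR L) =
  INR (N - (j + m) - y) * pp (lam * sigma) N x y * (1 - kap Gam N j * (INR m * / INR N)).
Proof.
  rewrite (coll_L _ _ _ _ _ _ _ _ _ (fun _ _ L => INR L)).
  rewrite (E_ext _ _ _ (fun c => INR (N - (j + m) - y) * pp (lam * sigma) N x y +
     (- INR (N - (j + m) - y) * pp (lam * sigma) N x y * kap Gam N j) * INR c)).
  - rewrite E_affine. ring.
  - intros c _.
    rewrite (E_ext _ _ _ (fun K => INR (N - (j + m) - y) * pp (lam * sigma) N x y +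
       (- pp (lam * sigma) N x y) * INR K)).
    + rewrite E_affine, qc_eq. ring.
    + intros K HK. rewrite E_id. rewrite minus_INR by exact HK. ring.
Qed.

Lemma E_sq_B n p B : 0 <= p <= 1 -> INR n * p <= B -> E n p (fun k => INR k ^ 2) <= B + B ^ 2.
Proof.
  intros Hp HB. eapply Rle_trans; [apply E_sq_le; auto|].
  assert (0 <= INR n * p) by (apply Rmult_le_pos; [apply pos_INR|lra]). nra.
Qed.

Definition kp (Gam : R) := 2 / (1 - Gam).

Lemma nq_bound Gam lam alpha sigma N j c n : params Gam lam alpha sigma -> good Gam lam alpha sigma N ->
  (j <= N)%nat -> (n <= N)%nat -> INR n * qc Gam N j c <= kp Gam * INR c.
Proof.
  intros Hp Hg Hj Hn. pose proof (den_pos _ _ _ _ _ j Hp Hg Hj) as Hd.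
  destruct (gm_facts _ _ _ _ _ Hp Hg) as [H1 H2]. pose proof (good_N _ _ _ _ _ Hg) as HN.
  destruct Hp as [HG _]. apply le_INR in Hn. pose proof (pos_INR c). pose proof (pos_INR n).
  unfold qc, kp.
  assert (INR n * gm Gam N <= 1) by nra.
  assert (0 < 1 - gm Gam N * INR j) by lra.
  unfold Rdiv. 
  replace (INR n * (gm Gam N * INR c * / (1 - gm Gam N * INR j))) with
     ((INR n * gm Gam N) * INR c * / (1 - gm Gam N * INR j)) by ring.
  replace (2 * / (1 - Gam) * INR c) with (INR c * / ((1 - Gam) / 2)) by (field; lra).
  apply Rmult_le_compat.
  - apply Rmult_le_pos; [apply Rmult_le_pos|]; lra.
  - apply Rlt_le, Rinv_0_lt_compat; lra.
  - pose proof (Rmult_le_compat_r (INR c) _ _ H H3). lra.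
  - apply Rinv_le_contravar; lra.
Qed.

Lemma np_bound Gam lam alpha sigma N x y l n : params Gam lam alpha sigma -> good Gam lam alpha sigma N ->
  0 <= l -> l <= INR N -> (x + y <= N)%nat -> (n <= N)%nat -> INR n * pp l N x y <= l.
Proof.
  intros Hp Hg Hl HlN Hxy Hn.
  destruct (pp_range _ _ _ _ _ x y l Hp Hg Hl HlN Hxy) as [[H0 H1] H2].
  pose proof (good_N _ _ _ _ _ Hg) as HN. apply le_INR in Hn.
  apply Rle_trans with (INR N * (l / INR N)).
  - apply Rmult_le_compat; auto; apply pos_INR.
  - right. field. lra.
Qed.

Lemma kp_pos Gam lam alpha sigma : params Gam lam alpha sigma -> 0 < kp Gam.
Proof. intros [HG _]. unfold kp. apply Rdiv_lt_0_compat; lra. Qed.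

Lemma s_c Gam lam alpha sigma N j m x y : params Gam lam alpha sigma -> good Gam lam alpha sigma N ->
  Inv N (j, m, x, y) ->
  nestedE Gam lam alpha sigma N j m x y (fun c _ _ _ _ _ => INR c ^ 2) <= 2.
Proof.
  intros Hp Hg HI. simpl in HI. rewrite (coll_c _ _ _ _ _ _ _ _ _ (fun c => INR c ^ 2)).
  pose proof (good_N _ _ _ _ _ Hg) as HN.
  assert (INR m * / INR N <= 1).
  { assert (INR m <= INR N) by (apply le_INR; lia).
    apply Rmult_le_reg_r with (INR N); [lra|]. rewrite Rmult_assoc, Rinv_l by lra. lra. }
  eapply Rle_trans; [apply E_sq_B with (B := 1)|]; [apply invN_range; destruct Hg; lia|lra|lra].
Qed.

Lemma E_c_bound N m B (f : nat -> R) : (1 <= N)%nat -> (m <= N)%nat -> 0 <= B ->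
  (forall c, (c <= m)%nat -> f c <= B * INR c + B ^ 2 * INR c ^ 2) ->
  E m (/ INR N) f <= B + 2 * B ^ 2.
Proof.
  intros HN Hm HB H.
  eapply Rle_trans; [apply E_le; [apply invN_range; auto| exact H]|].
  rewrite E_plus, E_scal, E_scal, E_id.
  assert (HN' : 1 <= INR N) by (apply le_INR in HN; simpl in HN; lra).
  assert (H1 : INR m * / INR N <= 1).
  { assert (INR m <= INR N) by (apply le_INR; lia).
    apply Rmult_le_reg_r with (INR N); [lra|]. rewrite Rmult_assoc, Rinv_l by lra. lra. }
  pose proof (E_sq_B m (/ INR N) 1 (invN_range N HN) H1).
  assert (0 <= INR m * / INR N) by (apply Rmult_le_pos; [apply pos_INR| apply invN_range; auto]).
  assert (0 <= B ^ 2) by nra.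
  assert (B ^ 2 * E m (/ INR N) (fun k => INR k ^ 2) <= B ^ 2 * 2) by (apply Rmult_le_compat_l; lra).
  nra.
Qed.

Lemma s_R1 Gam lam alpha sigma N j m x y : params Gam lam alpha sigma -> good Gam lam alpha sigma N ->
  Inv N (j, m, x, y) ->
  nestedE Gam lam alpha sigma N j m x y (fun _ R1 _ _ _ _ => INR R1 ^ 2) <= kp Gam + 2 * kp Gam ^ 2.
Proof.
  intros Hp Hg HI. simpl in HI. rewrite (coll_R1 _ _ _ _ _ _ _ _ _ (fun _ R1 => INR R1 ^ 2)).
  pose proof (kp_pos _ _ _ _ Hp).
  apply E_c_bound; try lia; [destruct Hg; lia|lra|].
  intros c Hc. pose proof (qc_range _ _ _ _ _ j c Hp Hg ltac:(lia)) as Hq.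
  pose proof (nq_bound _ _ _ _ _ j c y Hp Hg ltac:(lia) ltac:(lia)) as Hb.
  eapply Rle_trans; [apply E_sq_B; eauto|].
  pose proof (pos_INR c). 
  assert (0 <= INR y * qc Gam N j c) by (apply Rmult_le_pos; [apply pos_INR|lra]). nra.
Qed.

Lemma s_K Gam lam alpha sigma N j m x y : params Gam lam alpha sigma -> good Gam lam alpha sigma N ->
  Inv N (j, m, x, y) ->
  nestedE Gam lam alpha sigma N j m x y (fun _ _ K _ _ _ => INR K ^ 2) <= kp Gam + 2 * kp Gam ^ 2.
Proof.
  intros Hp Hg HI. simpl in HI. rewrite (coll_K _ _ _ _ _ _ _ _ _ (fun _ K => INR K ^ 2)).
  pose proof (kp_pos _ _ _ _ Hp).
  apply E_c_bound; try lia; [destruct Hg; lia|lra|].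
  intros c Hc. pose proof (qc_range _ _ _ _ _ j c Hp Hg ltac:(lia)) as Hq.
  pose proof (nq_bound _ _ _ _ _ j c (N - (j + m) - y) Hp Hg ltac:(lia) ltac:(lia)) as Hb.
  eapply Rle_trans; [apply E_sq_B; eauto|].
  pose proof (pos_INR c). 
  assert (0 <= INR (N - (j + m) - y) * qc Gam N j c) by (apply Rmult_le_pos; [apply pos_INR|lra]). nra.
Qed.

Lemma s_L Gam lam alpha sigma N j m x y : params Gam lam alpha sigma -> good Gam lam alpha sigma N ->
  Inv N (j, m, x, y) ->
  nestedE Gam lam alpha sigma N j m x y (fun _ _ _ _ L _ => INR L ^ 2) <= lam * sigma + (lam * sigma) ^ 2.
Proof.
  intros Hp Hg HI. simpl in HI. rewrite (coll_L _ _ _ _ _ _ _ _ _ (fun _ _ L => INR L ^ 2)).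
  pose proof Hp as [HG [Hl [Ha Hs]]]. pose proof Hg as [_ [_ [Hla Hls]]].
  assert (Hxy : (x + y <= N)%nat) by lia.
  destruct (pp_range _ _ _ _ _ x y (lam * sigma) Hp Hg ltac:(nra) Hls Hxy) as [[H0 H1] H2].
  rewrite <- (E_const m (/ INR N) (lam * sigma + (lam * sigma) ^ 2)).
  apply E_le; [apply invN_range; destruct Hg; lia|]. intros c Hc.
  pose proof (qc_range _ _ _ _ _ j c Hp Hg ltac:(lia)) as Hq.
  rewrite <- (E_const (N - (j + m) - y) (qc Gam N j c) (lam * sigma + (lam * sigma) ^ 2)).
  apply E_le; auto. intros K HK.
  apply E_sq_B; [lra|]. apply np_bound with Gam lam alpha sigma; auto; try nra; lia.
Qed.

Lemma s_G Gam lam alpha sigma N j m x y : params Gam lam alpha sigma -> good Gam lam alpha sigma N ->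
  Inv N (j, m, x, y) ->
  nestedE Gam lam alpha sigma N j m x y (fun _ _ _ _ _ G => INR G ^ 2) <= lam * alpha + (lam * alpha) ^ 2.
Proof.
  intros Hp Hg HI. simpl in HI. rewrite (coll_G _ _ _ _ _ _ _ _ _ (fun G => INR G ^ 2)).
  pose proof Hp as [HG [Hl [Ha Hs]]]. pose proof Hg as [_ [_ [Hla Hls]]].
  assert (Hxy : (x + y <= N)%nat) by lia.
  destruct (pp_range _ _ _ _ _ x y (lam * alpha) Hp Hg ltac:(nra) Hla Hxy) as [[H0 H1] H2].
  apply E_sq_B; [lra|]. apply np_bound with Gam lam alpha sigma; auto; try nra; lia.
Qed.

Definition gF (Gam b d h : R) := Gam * d / (1 - h - Gam * b).
Definition Fb (b d x y h : R) := d.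
Definition Fd (Gam b d x y h : R) := - d + (1 - b - d) * gF Gam b d h.
Definition Fx (Gam la ls b d x y h : R) :=
  la * (b + d - x) * (x + y) + y * gF Gam b d h + (1 - b - d - y) * gF Gam b d h * ls * (x + y) * h.
Definition Fy (Gam la ls b d x y h : R) :=
  (1 - b - d - y) * (1 - gF Gam b d h * h) * ls * (x + y) - y * gF Gam b d h.

Lemma kapm Gam lam alpha sigma N j m : params Gam lam alpha sigma -> good Gam lam alpha sigma N ->
  (j <= N)%nat ->
  kap Gam N j * (INR m * / INR N) = gF Gam (INR j / INR N) (INR m / INR N) (/ INR N) / INR N.
Proof.
  intros Hp Hg Hj. pose proof (den_pos _ _ _ _ _ j Hp Hg Hj) as Hd.
  pose proof (good_N _ _ _ _ _ Hg) as HN. destruct Hp as [HG _].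
  assert (E1 : 1 - / INR N - Gam * (INR j / INR N) = (INR N - 1) / INR N * (1 - gm Gam N * INR j)).
  { unfold gm. field. lra. }
  unfold gF, kap. rewrite E1. unfold gm. field. repeat split; try lra.
  unfold gm in Hd. intro H0. 
  assert (Gam / (INR N - 1) * INR j = 1) by (apply Rmult_eq_reg_r with (INR N - 1); [field_simplify; lra|lra]).
  lra.
Qed.

Lemma den2 Gam lam alpha sigma N j : params Gam lam alpha sigma -> good Gam lam alpha sigma N ->
  (j <= N)%nat -> 0 < INR N - 1 - Gam * INR j.
Proof.
  intros Hp Hg Hj. pose proof (den_pos _ _ _ _ _ j Hp Hg Hj) as Hd.
  pose proof (good_N _ _ _ _ _ Hg) as HN. destruct Hp as [HG _]. unfold gm in Hd.
  assert (0 < 1 - Gam / (INR N - 1) * INR j) by lra.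
  replace (INR N - 1 - Gam * INR j) with ((INR N - 1) * (1 - Gam / (INR N - 1) * INR j)) by (field; lra).
  apply Rmult_lt_0_compat; lra.
Qed.

Ltac fsolve := unfold Fd, Fx, Fy, gF, kap, gm, pp; rewrite ?plus_INR; field; repeat split; lra.


Lemma mean_d Gam lam alpha sigma N j m x y : params Gam lam alpha sigma -> good Gam lam alpha sigma N ->
  Inv N (j, m, x, y) ->
  - (INR m * / INR N) + INR y * kap Gam N j * (INR m * / INR N) +
    INR (N - (j + m) - y) * kap Gam N j * (INR m * / INR N) =
  Fd Gam (INR j / INR N) (INR m / INR N) (INR x / INR N) (INR y / INR N) (/ INR N).
Proof.
  intros Hp Hg HI. simpl in HI. pose proof (good_N _ _ _ _ _ Hg) as HN.
  pose proof (den2 _ _ _ _ _ j Hp Hg ltac:(lia)).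
  rewrite !minus_INR by lia. rewrite !plus_INR. fsolve.
Qed.

Lemma mean_x Gam lam alpha sigma N j m x y : params Gam lam alpha sigma -> good Gam lam alpha sigma N ->
  Inv N (j, m, x, y) ->
  INR ((j + m) - x) * pp (lam * alpha) N x y + INR y * kap Gam N j * (INR m * / INR N) +
  INR (N - (j + m) - y) * kap Gam N j * (INR m * / INR N) * pp (lam * sigma) N x y =
  Fx Gam (lam * alpha) (lam * sigma) (INR j / INR N) (INR m / INR N) (INR x / INR N) (INR y / INR N) (/ INR N).
Proof.
  intros Hp Hg HI. simpl in HI. pose proof (good_N _ _ _ _ _ Hg) as HN.
  pose proof (den2 _ _ _ _ _ j Hp Hg ltac:(lia)).
  rewrite !minus_INR by lia. rewrite !plus_INR. fsolve.
Qed.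

Lemma mean_y Gam lam alpha sigma N j m x y : params Gam lam alpha sigma -> good Gam lam alpha sigma N ->
  Inv N (j, m, x, y) ->
  INR (N - (j + m) - y) * pp (lam * sigma) N x y * (1 - kap Gam N j * (INR m * / INR N)) -
  INR y * kap Gam N j * (INR m * / INR N) =
  Fy Gam (lam * alpha) (lam * sigma) (INR j / INR N) (INR m / INR N) (INR x / INR N) (INR y / INR N) (/ INR N).
Proof.
  intros Hp Hg HI. simpl in HI. pose proof (good_N _ _ _ _ _ Hg) as HN.
  pose proof (den2 _ _ _ _ _ j Hp Hg ltac:(lia)).
  rewrite !minus_INR by lia. rewrite !plus_INR. fsolve.
Qed.

Lemma sq_lem e v d : (e + v - d) ^ 2 <= e ^ 2 + 2 * e * v - 2 * e * d + 2 * v ^ 2 + 2 * d ^ 2.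
Proof. pose proof (pow2_ge_0 (v + d)). nra. Qed.

Lemma poly8 c R1 K K1 L G : 0 <= K1 <= K ->
  c ^ 2 + (- c + R1 + K) ^ 2 + (G + R1 + K1) ^ 2 + (L - R1) ^ 2 <=
  8 * (c ^ 2 + R1 ^ 2 + K ^ 2 + L ^ 2 + G ^ 2).
Proof.
  intros H.
  assert ((- c + R1 + K) ^ 2 <= 3 * (c ^ 2 + R1 ^ 2 + K ^ 2)) by (pose proof (pow2_ge_0 (c+R1)); pose proof (pow2_ge_0 (c+K)); pose proof (pow2_ge_0 (R1-K)); nra).
  assert ((G + R1 + K1) ^ 2 <= 3 * (G ^ 2 + R1 ^ 2 + K1 ^ 2)) by (pose proof (pow2_ge_0 (G-R1)); pose proof (pow2_ge_0 (G-K1)); pose proof (pow2_ge_0 (R1-K1)); nra).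
  assert ((L - R1) ^ 2 <= 2 * (L ^ 2 + R1 ^ 2)) by (pose proof (pow2_ge_0 (L+R1)); nra).
  assert (K1 ^ 2 <= K ^ 2) by nra.
  nra.
Qed.

Definition Sdev (N : nat) (s : state) (wb wd wx wy : R) : R :=
  let '(B, D, X, Y) := s in
  (INR B / INR N - wb) ^ 2 + (INR D / INR N - wd) ^ 2 + (INR X / INR N - wx) ^ 2 + (INR Y / INR N - wy) ^ 2.

Definition Cq Gam lam alpha sigma :=
  2 + 2 * (kp Gam + 2 * kp Gam ^ 2) + (lam * sigma + (lam * sigma) ^ 2) + (lam * alpha + (lam * alpha) ^ 2).

Lemma drift_pt (N : nat) j m x y c R1 K K1 L G wb wd wx wy wb' wd' wx' wy' :
  (2 <= N)%nat -> (c <= m)%nat -> (R1 <= y)%nat -> (K1 <= K)%nat ->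
  Sdev N (newst j m x y c R1 K K1 L G) wb' wd' wx' wy' <=
  ((INR j / INR N - wb) ^ 2 + (INR m / INR N - wd) ^ 2 + (INR x / INR N - wx) ^ 2 + (INR y / INR N - wy) ^ 2)
  - 2 * ((INR j / INR N - wb) * (wb' - wb) + (INR m / INR N - wd) * (wd' - wd)
         + (INR x / INR N - wx) * (wx' - wx) + (INR y / INR N - wy) * (wy' - wy))
  + 2 * ((wb' - wb) ^ 2 + (wd' - wd) ^ 2 + (wx' - wx) ^ 2 + (wy' - wy) ^ 2)
  + (2 / INR N * ((INR j / INR N - wb) - (INR m / INR N - wd))) * INR c
  + (2 / INR N * ((INR m / INR N - wd) + (INR x / INR N - wx) - (INR y / INR N - wy))) * INR R1
  + (2 / INR N * (INR m / INR N - wd)) * INR K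
  + (2 / INR N * (INR x / INR N - wx)) * INR K1
  + (2 / INR N * (INR y / INR N - wy)) * INR L
  + (2 / INR N * (INR x / INR N - wx)) * INR G
  + 16 / INR N ^ 2 * (INR c ^ 2 + INR R1 ^ 2 + INR K ^ 2 + INR L ^ 2 + INR G ^ 2).
Proof.
  intros HN Hc HR1 HK1.
  assert (HNR : 2 <= INR N) by (apply le_INR in HN; simpl in HN; lra).
  unfold newst, Sdev.
  rewrite !plus_INR, !minus_INR by lia. rewrite ?plus_INR.
  set (eb := INR j / INR N - wb). set (ed := INR m / INR N - wd).
  set (ex := INR x / INR N - wx). set (ey := INR y / INR N - wy).
  replace ((INR j + INR c) / INR N - wb') with (eb + INR c / INR N - (wb' - wb)) by (unfold eb; field; lra).
  replace ((INR m - INR c + INR R1 + INR K) / INR N - wd') with (ed + (- INR c + INR R1 + INR K) / INR N - (wd' - wd)) by (unfold ed; field; lra).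
  replace ((INR x + INR G + INR R1 + INR K1) / INR N - wx') with (ex + (INR G + INR R1 + INR K1) / INR N - (wx' - wx)) by (unfold ex; field; lra).
  replace ((INR y - INR R1 + INR L) / INR N - wy') with (ey + (INR L - INR R1) / INR N - (wy' - wy)) by (unfold ey; field; lra).
  pose proof (sq_lem eb (INR c / INR N) (wb' - wb)).
  pose proof (sq_lem ed ((- INR c + INR R1 + INR K) / INR N) (wd' - wd)).
  pose proof (sq_lem ex ((INR G + INR R1 + INR K1) / INR N) (wx' - wx)).
  pose proof (sq_lem ey ((INR L - INR R1) / INR N) (wy' - wy)).
  assert (HK1' : INR K1 <= INR K) by (apply le_INR; auto).
  pose proof (poly8 (INR c) (INR R1) (INR K) (INR K1) (INR L) (INR G) (conj (pos_INR K1) HK1')) as H8.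
  assert (E8 : 2 * (INR c / INR N) ^ 2 + 2 * ((- INR c + INR R1 + INR K) / INR N) ^ 2 +
     2 * ((INR G + INR R1 + INR K1) / INR N) ^ 2 + 2 * ((INR L - INR R1) / INR N) ^ 2 =
     2 / INR N ^ 2 * (INR c ^ 2 + (- INR c + INR R1 + INR K) ^ 2 + (INR G + INR R1 + INR K1) ^ 2 + (INR L - INR R1) ^ 2))
     by (field; lra).
  assert (0 < 2 / INR N ^ 2) by (apply Rdiv_lt_0_compat; nra).
  pose proof (Rmult_le_compat_l _ _ _ (Rlt_le _ _ H3) H8).
  assert (EL : 2 * eb * (INR c / INR N) + 2 * ed * ((- INR c + INR R1 + INR K) / INR N) +
     2 * ex * ((INR G + INR R1 + INR K1) / INR N) + 2 * ey * ((INR L - INR R1) / INR N) =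
     (2 / INR N * (eb - ed)) * INR c + (2 / INR N * (ed + ex - ey)) * INR R1 + (2 / INR N * ed) * INR K
     + (2 / INR N * ex) * INR K1 + (2 / INR N * ey) * INR L + (2 / INR N * ex) * INR G) by (field; lra).
  assert (EQ : 2 / INR N ^ 2 * (8 * (INR c ^ 2 + INR R1 ^ 2 + INR K ^ 2 + INR L ^ 2 + INR G ^ 2)) =
     16 / INR N ^ 2 * (INR c ^ 2 + INR R1 ^ 2 + INR K ^ 2 + INR L ^ 2 + INR G ^ 2)) by (field; lra).
  lra.
Qed.

Lemma drift Gam lam alpha sigma N j m x y wb wd wx wy wb' wd' wx' wy' :
  params Gam lam alpha sigma -> good Gam lam alpha sigma N -> Inv N (j, m, x, y) ->
  hilt_step Gam lam alpha sigma N (fun s => Sdev N s wb' wd' wx' wy') (j, m, x, y) <=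
  Sdev N (j, m, x, y) wb wd wx wy
  + 2 * ((INR j / INR N - wb) * (Fb (INR j / INR N) (INR m / INR N) (INR x / INR N) (INR y / INR N) (/ INR N) / INR N - (wb' - wb))
       + (INR m / INR N - wd) * (Fd Gam (INR j / INR N) (INR m / INR N) (INR x / INR N) (INR y / INR N) (/ INR N) / INR N - (wd' - wd))
       + (INR x / INR N - wx) * (Fx Gam (lam * alpha) (lam * sigma) (INR j / INR N) (INR m / INR N) (INR x / INR N) (INR y / INR N) (/ INR N) / INR N - (wx' - wx))
       + (INR y / INR N - wy) * (Fy Gam (lam * alpha) (lam * sigma) (INR j / INR N) (INR m / INR N) (INR x / INR N) (INR y / INR N) (/ INR N) / INR N - (wy' - wy)))
  + 2 * ((wb' - wb) ^ 2 + (wd' - wd) ^ 2 + (wx' - wx) ^ 2 + (wy' - wy) ^ 2)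
  + 16 / INR N ^ 2 * Cq Gam lam alpha sigma.
Proof.
  intros Hp Hg HI.
  pose proof (good_N _ _ _ _ _ Hg) as HNR.
  rewrite step_nested.
  eapply Rle_trans.
  { apply nestedE_le; auto. intros c R1 K K1 L G Hc HR1 HK HK1 HL HG.
    apply (drift_pt N j m x y c R1 K K1 L G wb wd wx wy wb' wd' wx' wy'); auto. destruct Hg; auto. }
  repeat rewrite nestedE_plus.
  repeat rewrite nestedE_scal.
  repeat rewrite nestedE_plus.
  rewrite !nestedE_const.
  rewrite m_c, m_R1, m_K, m_K1, m_L, m_G.
  pose proof (s_c _ _ _ _ _ _ _ _ _ Hp Hg HI).
  pose proof (s_R1 _ _ _ _ _ _ _ _ _ Hp Hg HI).
  pose proof (s_K _ _ _ _ _ _ _ _ _ Hp Hg HI).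
  pose proof (s_L _ _ _ _ _ _ _ _ _ Hp Hg HI).
  pose proof (s_G _ _ _ _ _ _ _ _ _ Hp Hg HI).
  rewrite <- (mean_d _ _ _ _ _ _ _ _ _ Hp Hg HI).
  rewrite <- (mean_x _ _ _ _ _ _ _ _ _ Hp Hg HI).
  rewrite <- (mean_y _ _ _ _ _ _ _ _ _ Hp Hg HI).
  unfold Fb, Sdev, Cq.
  apply Rplus_le_compat.
  - right. field. lra.
  - apply Rmult_le_compat_l; [apply Rlt_le, Rdiv_lt_0_compat; nra | lra].
Qed.

Lemma lipC a D : 0 <= D -> Rabs (a - a) <= 0 * D.
Proof. intros. rewrite Rminus_diag, Rabs_R0. lra. Qed.

Lemma lipA u1 u2 v1 v2 K1 K2 D : Rabs (u1 - u2) <= K1 * D -> Rabs (v1 - v2) <= K2 * D ->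
  Rabs ((u1 + v1) - (u2 + v2)) <= (K1 + K2) * D.
Proof. intros. replace ((u1 + v1) - (u2 + v2)) with ((u1 - u2) + (v1 - v2)) by ring.
  eapply Rle_trans; [apply Rabs_triang|]. lra. Qed.

Lemma lipS u1 u2 v1 v2 K1 K2 D : Rabs (u1 - u2) <= K1 * D -> Rabs (v1 - v2) <= K2 * D ->
  Rabs ((u1 - v1) - (u2 - v2)) <= (K1 + K2) * D.
Proof. intros. replace ((u1 - v1) - (u2 - v2)) with ((u1 - u2) + - (v1 - v2)) by ring.
  eapply Rle_trans; [apply Rabs_triang|]. rewrite Rabs_Ropp. lra. Qed.

Lemma lipN u1 u2 K1 D : Rabs (u1 - u2) <= K1 * D -> Rabs (- u1 - - u2) <= K1 * D.
Proof. intros. replace (- u1 - - u2) with (- (u1 - u2)) by ring. rewrite Rabs_Ropp. auto. Qed.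

Lemma lipM u1 u2 v1 v2 K1 K2 M1 M2 D : Rabs (u1 - u2) <= K1 * D -> Rabs (v1 - v2) <= K2 * D ->
  Rabs u1 <= M1 -> Rabs v2 <= M2 ->
  Rabs (u1 * v1 - u2 * v2) <= (M1 * K2 + M2 * K1) * D.
Proof.
  intros H1 H2 H3 H4. replace (u1 * v1 - u2 * v2) with (u1 * (v1 - v2) + v2 * (u1 - u2)) by ring.
  eapply Rle_trans; [apply Rabs_triang|]. rewrite !Rabs_mult.
  assert (Rabs u1 * Rabs (v1 - v2) <= M1 * (K2 * D)) by (apply Rmult_le_compat; auto; apply Rabs_pos).
  assert (Rabs v2 * Rabs (u1 - u2) <= M2 * (K1 * D)) by (apply Rmult_le_compat; auto; apply Rabs_pos).
  lra.
Qed.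

Lemma bM u v M1 M2 : Rabs u <= M1 -> Rabs v <= M2 -> Rabs (u * v) <= M1 * M2.
Proof. intros. rewrite Rabs_mult. apply Rmult_le_compat; auto; apply Rabs_pos. Qed.
Lemma bA u v M1 M2 : Rabs u <= M1 -> Rabs v <= M2 -> Rabs (u + v) <= M1 + M2.
Proof. intros. eapply Rle_trans; [apply Rabs_triang|]. lra. Qed.
Lemma bS u v M1 M2 : Rabs u <= M1 -> Rabs v <= M2 -> Rabs (u - v) <= M1 + M2.
Proof. intros. eapply Rle_trans; [apply Rabs_triang|]. rewrite Rabs_Ropp. lra. Qed.
Lemma bN u M1 : Rabs u <= M1 -> Rabs (- u) <= M1.
Proof. intros. rewrite Rabs_Ropp. auto. Qed.

Lemma g_bound Gam b d h M del : 0 < Gam < 1 -> 0 < del -> Rabs d <= M -> del <= 1 - h - Gam * b ->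
  Rabs (gF Gam b d h) <= M / del.
Proof.
  intros HG Hd Hdm Hden. unfold gF. unfold Rdiv. rewrite !Rabs_mult, Rabs_inv.
  rewrite (Rabs_pos_eq Gam) by lra. rewrite (Rabs_pos_eq (1 - h - Gam * b)) by lra.
  assert (0 <= M) by (pose proof (Rabs_pos d); lra).
  assert (/ (1 - h - Gam * b) <= / del) by (apply Rinv_le_contravar; lra).
  assert (0 < / (1 - h - Gam * b)) by (apply Rinv_0_lt_compat; lra).
  assert (Gam * Rabs d <= M) by (pose proof (Rabs_pos d); nra).
  apply Rmult_le_compat; try lra. apply Rmult_le_pos; [lra|apply Rabs_pos].
Qed.

Lemma g_lip Gam b1 d1 h1 b2 d2 h2 M del D : 0 < Gam < 1 -> 0 < del ->
  Rabs d2 <= M -> Rabs b2 <= M -> Rabs h2 <= 1 ->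
  del <= 1 - h1 - Gam * b1 -> del <= 1 - h2 - Gam * b2 ->
  Rabs (d1 - d2) <= 1 * D -> Rabs (b1 - b2) <= 1 * D -> Rabs (h1 - h2) <= 1 * D ->
  Rabs (gF Gam b1 d1 h1 - gF Gam b2 d2 h2) <= ((2 + 3 * M) / del ^ 2) * D.
Proof.
  intros HG Hdel Hd2 Hb2 Hh2 Q1 Q2 Dd Db Dh.
  set (q1 := 1 - h1 - Gam * b1) in *. set (q2 := 1 - h2 - Gam * b2) in *.
  assert (E1 : gF Gam b1 d1 h1 - gF Gam b2 d2 h2 = Gam * ((d1 - d2) * q2 + d2 * (q2 - q1)) / (q1 * q2)).
  { unfold gF. fold q1 q2. field. lra. }
  rewrite E1. unfold Rdiv. rewrite Rabs_mult, Rabs_mult, Rabs_inv.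
  rewrite (Rabs_pos_eq Gam) by lra. rewrite (Rabs_pos_eq (q1 * q2)) by nra.
  assert (Hq2 : Rabs q2 <= 2 + M).
  { unfold q2. eapply Rle_trans; [apply bS; [apply bS|]|]. 
    - rewrite Rabs_R1. apply Rle_refl. - exact Hh2. - apply bM. rewrite Rabs_pos_eq by lra. apply Rle_refl. exact Hb2.
    - pose proof (Rabs_pos b2). assert (Gam * M <= M) by nra. lra. }
  assert (Hq21 : Rabs (q2 - q1) <= 2 * D).
  { replace (q2 - q1) with ((h1 - h2) + Gam * (b1 - b2)) by (unfold q1, q2; ring).
    eapply Rle_trans; [apply Rabs_triang|]. rewrite Rabs_mult, (Rabs_pos_eq Gam) by lra.
    assert (Gam * Rabs (b1 - b2) <= 1 * D) by (pose proof (Rabs_pos (b1 - b2)); nra). lra. }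
  assert (HN : Rabs ((d1 - d2) * q2 + d2 * (q2 - q1)) <= (2 + 3 * M) * D).
  { eapply Rle_trans; [apply Rabs_triang|]. rewrite !Rabs_mult.
    assert (0 <= D) by (pose proof (Rabs_pos (d1 - d2)); lra).
    assert (Rabs (d1 - d2) * Rabs q2 <= (1 * D) * (2 + M)) by (apply Rmult_le_compat; auto; apply Rabs_pos).
    assert (Rabs d2 * Rabs (q2 - q1) <= M * (2 * D)) by (apply Rmult_le_compat; auto; apply Rabs_pos).
    nra. }
  assert (0 < q1 * q2) by nra.
  assert (/ (q1 * q2) <= / del ^ 2) by (apply Rinv_le_contravar; nra).
  assert (0 <= Rabs ((d1 - d2) * q2 + d2 * (q2 - q1))) by apply Rabs_pos.
  assert (0 < / del ^ 2) by (apply Rinv_0_lt_compat; nra).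
  assert (Gam * Rabs ((d1 - d2) * q2 + d2 * (q2 - q1)) <= (2 + 3 * M) * D) by nra.
  assert (0 <= D) by (pose proof (Rabs_pos (d1 - d2)); lra).
  replace ((2 + 3 * M) * / del ^ 2 * D) with (((2 + 3 * M) * D) * / del ^ 2) by ring.
  apply Rmult_le_compat; try lra. apply Rmult_le_pos; [lra|apply Rabs_pos]. apply Rlt_le, Rinv_0_lt_compat; lra.
Qed.

Ltac bnd := first
 [ eapply g_bound; eassumption
 | eapply bM; [bnd|bnd]
 | eapply bA; [bnd|bnd]
 | eapply bS; [bnd|bnd]
 | eapply bN; bnd
 | eassumption
 | apply Rle_refl ].

Ltac lip HD0 := first
 [ eapply lipC; exact HD0
 | eapply g_lip; eassumption
 | eapply lipA; [lip HD0|lip HD0]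
 | eapply lipS; [lip HD0|lip HD0]
 | eapply lipN; lip HD0
 | eapply lipM; [lip HD0|lip HD0|bnd|bnd]
 | eassumption ].

Ltac prelude HD0 := 
    let b1 := fresh "b1" in let d1 := fresh "d1" in let x1 := fresh "x1" in let y1 := fresh "y1" in let h1 := fresh "h1" in
    let b2 := fresh "b2" in let d2 := fresh "d2" in let x2 := fresh "x2" in let y2 := fresh "y2" in let h2 := fresh "h2" in
    let D := fresh "D" in
    intros b1 d1 x1 y1 h1 b2 d2 x2 y2 h2 ? ? ? ? ? ? ? ? ? ? ? ?; cbv zeta; match goal with |- _ <= _ * ?DD => set (D := DD) end;
    assert (HD0 : 0 <= D) by (unfold D; pose proof (Rabs_pos (b1 - b2)); pose proof (Rabs_pos (d1 - d2));
       pose proof (Rabs_pos (x1 - x2)); pose proof (Rabs_pos (y1 - y2)); pose proof (Rabs_pos (h1 - h2)); lra);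
    assert (Rabs (b1 - b2) <= 1 * D) by (unfold D; pose proof (Rabs_pos (d1 - d2));
       pose proof (Rabs_pos (x1 - x2)); pose proof (Rabs_pos (y1 - y2)); pose proof (Rabs_pos (h1 - h2)); lra);
    assert (Rabs (d1 - d2) <= 1 * D) by (unfold D; pose proof (Rabs_pos (b1 - b2));
       pose proof (Rabs_pos (x1 - x2)); pose proof (Rabs_pos (y1 - y2)); pose proof (Rabs_pos (h1 - h2)); lra);
    assert (Rabs (x1 - x2) <= 1 * D) by (unfold D; pose proof (Rabs_pos (b1 - b2));
       pose proof (Rabs_pos (d1 - d2)); pose proof (Rabs_pos (y1 - y2)); pose proof (Rabs_pos (h1 - h2)); lra);
    assert (Rabs (y1 - y2) <= 1 * D) by (unfold D; pose proof (Rabs_pos (b1 - b2));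
       pose proof (Rabs_pos (d1 - d2)); pose proof (Rabs_pos (x1 - x2)); pose proof (Rabs_pos (h1 - h2)); lra);
    assert (Rabs (h1 - h2) <= 1 * D) by (unfold D; pose proof (Rabs_pos (b1 - b2));
       pose proof (Rabs_pos (d1 - d2)); pose proof (Rabs_pos (x1 - x2)); pose proof (Rabs_pos (y1 - y2)); lra);
    clearbody D.

Definition LipP (Gam M del : R) (F : R -> R -> R -> R -> R -> R) (L : R) :=
  forall b1 d1 x1 y1 h1 b2 d2 x2 y2 h2,
   Rabs b1 <= M -> Rabs d1 <= M -> Rabs x1 <= M -> Rabs y1 <= M -> Rabs h1 <= 1 ->
   Rabs b2 <= M -> Rabs d2 <= M -> Rabs x2 <= M -> Rabs y2 <= M -> Rabs h2 <= 1 ->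
   del <= 1 - h1 - Gam * b1 -> del <= 1 - h2 - Gam * b2 ->
   let D := Rabs (b1 - b2) + Rabs (d1 - d2) + Rabs (x1 - x2) + Rabs (y1 - y2) + Rabs (h1 - h2) in
   Rabs (F b1 d1 x1 y1 h1 - F b2 d2 x2 y2 h2) <= L * D.

Lemma Fb_lip Gam M del : exists L, LipP Gam M del Fb L.
Proof. eexists. unfold LipP. prelude HD0. unfold Fb. eassumption. Qed.

Lemma Fd_lip Gam M del : 0 < Gam < 1 -> 0 < del -> exists L, LipP Gam M del (Fd Gam) L.
Proof. intros HG Hdel. eexists. unfold LipP. prelude HD0. unfold Fd. lip HD0. Qed.

Lemma Fx_lip Gam la ls M del : 0 < Gam < 1 -> 0 < del -> exists L, LipP Gam M del (Fx Gam la ls) L.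
Proof. intros HG Hdel. eexists. unfold LipP. prelude HD0. unfold Fx. lip HD0. Qed.

Lemma Fy_lip Gam la ls M del : 0 < Gam < 1 -> 0 < del -> exists L, LipP Gam M del (Fy Gam la ls) L.
Proof. intros HG Hdel. eexists. unfold LipP. prelude HD0. unfold Fy. lip HD0. Qed.

Lemma LipP_mono Gam M del F L1 L2 : LipP Gam M del F L1 -> L1 <= L2 -> LipP Gam M del F L2.
Proof.
  unfold LipP. intros H HL b1 d1 x1 y1 h1 b2 d2 x2 y2 h2 Hb1 Hd1 Hx1 Hy1 Hh1 Hb2 Hd2 Hx2 Hy2 Hh2 Q1 Q2.
  cbv zeta. specialize (H b1 d1 x1 y1 h1 b2 d2 x2 y2 h2 Hb1 Hd1 Hx1 Hy1 Hh1 Hb2 Hd2 Hx2 Hy2 Hh2 Q1 Q2). cbv zeta in H.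
  eapply Rle_trans; [exact H|]. apply Rmult_le_compat_r; auto.
  pose proof (Rabs_pos (b1 - b2)); pose proof (Rabs_pos (d1 - d2));
       pose proof (Rabs_pos (x1 - x2)); pose proof (Rabs_pos (y1 - y2)); pose proof (Rabs_pos (h1 - h2)); lra.
Qed.

Lemma F_lip_all Gam la ls M del : 0 < Gam < 1 -> 0 < del ->
  exists L, 0 <= L /\ LipP Gam M del Fb L /\ LipP Gam M del (Fd Gam) L /\
     LipP Gam M del (Fx Gam la ls) L /\ LipP Gam M del (Fy Gam la ls) L.
Proof.
  intros HG Hdel.
  destruct (Fb_lip Gam M del) as [L1 H1].
  destruct (Fd_lip Gam M del HG Hdel) as [L2 H2].
  destruct (Fx_lip Gam la ls M del HG Hdel) as [L3 H3].
  destruct (Fy_lip Gam la ls M del HG Hdel) as [L4 H4].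
  exists (Rabs L1 + Rabs L2 + Rabs L3 + Rabs L4).
  pose proof (Rabs_pos L1). pose proof (Rabs_pos L2). pose proof (Rabs_pos L3). pose proof (Rabs_pos L4).
  pose proof (Rle_abs L1). pose proof (Rle_abs L2). pose proof (Rle_abs L3). pose proof (Rle_abs L4).
  repeat split; [lra| eapply LipP_mono; eauto; lra ..].
Qed.

Lemma hit_bound (step : (state -> R) -> state -> R) (bad : nat -> state -> Prop)
  (I : state -> Prop) (W : nat -> state -> R) (eta : R) (ntot : nat) :
  (forall f g z, I z -> (forall s, I s -> f s <= g s) -> step f z <= step g z) ->
  (forall f a z, step (fun s => f s + a) z = step f z + a) ->
  (forall a z, step (fun _ => a) z = a) ->
  (forall t z, I z -> bad t z -> 1 <= W t z) ->
  (forall t z, I z -> 0 <= W t z) ->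
  (forall t z, I z -> (t < ntot)%nat -> step (W (S t)) z <= W t z + eta) ->
  0 <= eta ->
  forall n t z, I z -> (t + n <= ntot)%nat ->
    0 <= hit_prob step bad n t z <= W t z + INR n * eta.
Proof.
  intros Hmono Hplus Hconst Hbad HW0 Hdrift Heta.
  induction n; intros t z HI Hn.
  - simpl. destruct (excluded_middle_informative (bad t z)) as [Hb|Hb].
    + split; [lra|]. specialize (Hbad t z HI Hb). lra.
    + split; [lra|]. specialize (HW0 t z HI). lra.
  - change (hit_prob step bad (S n) t z) with (if excluded_middle_informative (bad t z) then 1 else step (hit_prob step bad n (S t)) z).
    destruct (excluded_middle_informative (bad t z)) as [Hb|Hb].
    + split; [lra|]. specialize (Hbad t z HI Hb). pose proof (Rmult_le_pos _ _ (pos_INR (S n)) Heta). lra.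
    + split.
      * rewrite <- (Hconst 0 z). apply Hmono; auto. intros s Hs. apply (IHn (S t) s Hs). lia.
      * apply Rle_trans with (step (fun s => W (S t) s + INR n * eta) z).
        { apply Hmono; auto. intros s Hs. apply (IHn (S t) s Hs). lia. }
        rewrite Hplus. specialize (Hdrift t z HI ltac:(lia)). rewrite S_INR. lra.
Qed.

Lemma Rabs_le_inv a b : Rabs a <= b -> - b <= a <= b.
Proof. unfold Rabs. destruct (Rcase_abs a); lra. Qed.

Lemma exp_lin_der c u : derivable_pt_lim (fun v => exp (c * v)) u (c * exp (c * u)).
Proof.
  assert (H1 : derivable_pt_lim (mult_real_fct c id) u (c * 1)) by (apply derivable_pt_lim_scal, derivable_pt_lim_id).
  pose proof (derivable_pt_lim_comp _ exp u _ _ H1 (derivable_pt_lim_exp _)) as H2.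
  unfold comp, mult_real_fct, id in H2. replace (c * exp (c * u)) with (exp (c * u) * (c * 1)) by ring.
  exact H2.
Qed.

Lemma psi_der f f' c u : derivable_pt_lim f u f' ->
  derivable_pt_lim (fun v => f v * f v * exp (c * v)) u ((2 * f u * f' + c * f u * f u) * exp (c * u)).
Proof.
  intros H.
  pose proof (derivable_pt_lim_mult f f u f' f' H H) as Hff.
  pose proof (derivable_pt_lim_mult _ _ u _ _ Hff (exp_lin_der c u)) as H3.
  unfold mult_fct in H3.
  replace ((2 * f u * f' + c * f u * f u) * exp (c * u)) with
    ((f' * f u + f u * f') * exp (c * u) + f u * f u * (c * exp (c * u))) by ring.
  exact H3.
Qed.

Lemma der_cont f u l : derivable_pt_lim f u l -> continuity_pt f u.
Proof. intros H. apply derivable_continuous_pt. exists l. exact H. Qed.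

Lemma sign_lemma (f k : R -> R) (U K : R) :
  0 <= K ->
  (forall u, 0 <= u <= U -> derivable_pt_lim f u (k u * f u)) ->
  (forall u, 0 <= u <= U -> Rabs (k u) <= K) ->
  0 <= f 0 -> forall u, 0 <= u <= U -> 0 <= f u.
Proof.
  intros HK Hd Hk Hf0 u Hu.
  destruct (Req_dec u 0) as [Hu0|Hu0]; [subst; auto|].
  assert (Hupos : 0 < u) by lra.
  destruct (Req_dec (f 0) 0) as [Hz|Hz].
  - (* psi = f^2 exp(-2K u) is nonincreasing *)
    set (psi := fun v => f v * f v * exp ((-2 * K) * v)).
    destruct (MVT_cor2 psi (fun v => (2 * f v * (k v * f v) + (-2 * K) * f v * f v) * exp ((-2 * K) * v)) 0 u Hupos)
      as [c [Hc1 Hc2]].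
    { intros c Hc. apply psi_der. apply Hd. lra. }
    assert (Hkc := Hk c ltac:(lra)). apply Rabs_le_inv in Hkc.
    assert (0 < exp (-2 * K * c)) by apply exp_pos.
    assert ((2 * f c * (k c * f c) + -2 * K * f c * f c) * exp (-2 * K * c) <= 0).
    { assert (2 * f c * (k c * f c) + -2 * K * f c * f c <= 0).
      { replace (2 * f c * (k c * f c) + -2 * K * f c * f c) with (2 * (f c * f c) * (k c - K)) by ring.
        assert (0 <= f c * f c) by nra. nra. }
      nra. }
    unfold psi in Hc1. rewrite Hz in Hc1. 
    assert (f u * f u * exp (-2 * K * u) <= 0) by nra.
    assert (0 < exp (-2 * K * u)) by apply exp_pos.
    assert (f u * f u <= 0) by nra.
    assert (f u = 0) by nra. lra.
  - assert (Hf0' : 0 < f 0) by lra.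
    set (psi := fun v => f v * f v * exp ((2 * K) * v)).
    assert (Hpsi : forall v, 0 < v <= u -> 0 < f v * f v).
    { intros v Hv.
      destruct (MVT_cor2 psi (fun v => (2 * f v * (k v * f v) + (2 * K) * f v * f v) * exp ((2 * K) * v)) 0 v ltac:(lra))
        as [c [Hc1 Hc2]].
      { intros c Hc. apply psi_der. apply Hd. lra. }
      assert (Hkc := Hk c ltac:(lra)). apply Rabs_le_inv in Hkc.
      assert (0 < exp (2 * K * c)) by apply exp_pos.
      assert (0 <= (2 * f c * (k c * f c) + 2 * K * f c * f c) * exp (2 * K * c)).
      { assert (0 <= 2 * f c * (k c * f c) + 2 * K * f c * f c).
        { replace (2 * f c * (k c * f c) + 2 * K * f c * f c) with (2 * (f c * f c) * (k c + K)) by ring.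
          assert (0 <= f c * f c) by nra. nra. }
        nra. }
      unfold psi in Hc1.
      replace (2 * K * 0) with 0 in Hc1 by ring. rewrite exp_0 in Hc1.
      assert (0 < f 0 * f 0) by nra.
      assert (0 < f v * f v * exp (2 * K * v)) by nra.
      assert (0 < exp (2 * K * v)) by apply exp_pos.
      destruct (Rle_or_lt (f v * f v) 0); [|lra].
      assert (f v * f v * exp (2 * K * v) <= 0 * exp (2 * K * v)) by (apply Rmult_le_compat_r; lra). lra. }
    destruct (Rle_or_lt 0 (f u)) as [H|H]; auto.
    exfalso.
    destruct (Ranalysis5.IVT_interv (fun v => - f v) 0 u) as [z [Hz1 Hz2]].
    + intros a Ha. apply (continuity_pt_opp f). apply der_cont with (k a * f a). apply Hd. lra.
    + lra.
    + lra.
    + lra.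
    + destruct (Req_dec z 0) as [->|Hz0]; [lra|].
      specialize (Hpsi z ltac:(lra)). assert (f z = 0) by lra. rewrite H0 in Hpsi. lra.
Qed.

Lemma cont_near f x eps : continuity_pt f x -> 0 < eps ->
  exists alp, 0 < alp /\ forall y, Rabs (y - x) < alp -> Rabs (f y - f x) < eps.
Proof.
  intros H He. destruct (H eps He) as [alp [Ha Hy]]. exists alp. split; [lra|].
  intros y Hyx. destruct (Req_dec y x) as [->|Hne].
  - rewrite Rminus_diag, Rabs_R0. lra.
  - apply (Hy y). split; [split; [exact I| auto]| exact Hyx].
Qed.

Lemma cont_bound f a b : a <= b -> (forall c, a <= c <= b -> continuity_pt f c) ->
  exists M, 0 <= M /\ forall c, a <= c <= b -> Rabs (f c) <= M.
Proof.
  intros Hab Hc.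
  destruct (continuity_ab_maj f a b Hab Hc) as [x1 [H1 Hx1]].
  destruct (continuity_ab_maj (fun c => - f c) a b Hab) as [x2 [H2 Hx2]].
  { intros c Hc'. apply (continuity_pt_opp f). auto. }
  exists (Rmax (Rabs (f x1)) (Rabs (f x2))). split.
  - eapply Rle_trans; [apply Rabs_pos| apply Rmax_l].
  - intros c Hc'. apply Rabs_le. specialize (H1 c Hc'). specialize (H2 c Hc').
    pose proof (Rmax_l (Rabs (f x1)) (Rabs (f x2))). pose proof (Rmax_r (Rabs (f x1)) (Rabs (f x2))).
    pose proof (Rle_abs (f x1)). pose proof (Rle_abs (- f x2)). rewrite Rabs_Ropp in H4. lra.
Qed.

Lemma abs_div_le num den A beta : Rabs num <= A -> 0 < beta -> beta <= den -> Rabs (num / den) <= A / beta.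
Proof.
  intros H1 H2 H3. unfold Rdiv. rewrite Rabs_mult, Rabs_inv, (Rabs_pos_eq den) by lra.
  apply Rmult_le_compat; try lra. apply Rabs_pos. apply Rlt_le, Rinv_0_lt_compat; lra.
  apply Rinv_le_contravar; lra.
Qed.

Lemma nice_interval (Gam d0 : R) (b d : R -> R) :
  0 < Gam < 1 -> 0 < d0 <= 1 -> b 0 = 0 -> d 0 = d0 ->
  (forall u, 0 <= u -> derivable_pt_lim b u (d u)) ->
  (forall u, 0 <= u -> derivable_pt_lim d u (Gam * d u / (1 - Gam * b u) * (1 - b u - d u) - d u)) ->
  forall U, 0 <= U -> (forall w, 0 <= w <= U -> Gam * b w < 1) -> forall w, 0 <= w <= U -> b w <= 1.
Proof.
  intros HG Hd0 Hb0 Hdd0 Hb Hd U HU Hnice.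
  assert (Cb : forall c, 0 <= c <= U -> continuity_pt b c) by (intros c Hc; apply der_cont with (d c); apply Hb; lra).
  assert (Cd : forall c, 0 <= c <= U -> continuity_pt d c) by (intros c Hc; eapply der_cont; apply Hd; lra).
  destruct (continuity_ab_maj b 0 U HU Cb) as [wm [Hwm Hwm']].
  pose proof (Hnice wm Hwm') as Hbm.
  set (beta := 1 - Gam * b wm).
  assert (Hbeta : 0 < beta) by (unfold beta; lra).
  assert (Hden : forall w, 0 <= w <= U -> beta <= 1 - Gam * b w).
  { intros w Hw. specialize (Hwm w Hw). unfold beta. nra. }
  destruct (cont_bound b 0 U HU Cb) as [Mb [HMb HMb']].
  destruct (cont_bound d 0 U HU Cd) as [Md [HMd HMd']].
  assert (Hdpos : forall w, 0 <= w <= U -> 0 <= d w).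
  { apply (sign_lemma d (fun w => Gam * (1 - b w - d w) / (1 - Gam * b w) - 1) U (Gam * (1 + Mb + Md) / beta + 1)).
    - assert (0 <= Gam * (1 + Mb + Md) / beta) by (apply Rmult_le_pos; [nra| apply Rlt_le, Rinv_0_lt_compat; lra]). lra.
    - intros u Hu. specialize (Hden u Hu).
      replace ((Gam * (1 - b u - d u) / (1 - Gam * b u) - 1) * d u) with
        (Gam * d u / (1 - Gam * b u) * (1 - b u - d u) - d u) by (field; lra).
      apply Hd. lra.
    - intros u Hu.
      assert (H1 : Rabs (Gam * (1 - b u - d u)) <= Gam * (1 + Mb + Md)).
      { rewrite Rabs_mult, (Rabs_pos_eq Gam) by lra. apply Rmult_le_compat_l; [lra|].
        specialize (HMb' u Hu). specialize (HMd' u Hu).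
        eapply Rle_trans; [apply Rabs_triang|]. rewrite Rabs_Ropp.
        eapply Rle_trans; [apply Rplus_le_compat_r; apply Rabs_triang|]. rewrite Rabs_Ropp, Rabs_R1. lra. }
      pose proof (abs_div_le _ _ _ _ H1 Hbeta (Hden u Hu)) as H2.
      eapply Rle_trans; [apply Rabs_triang|]. rewrite Rabs_Ropp, Rabs_R1. lra.
    - rewrite Hdd0. lra. }
  assert (Hapos : forall w, 0 <= w <= U -> 0 <= 1 - b w - d w).
  { apply (sign_lemma (fun w => 1 - b w - d w) (fun w => - (Gam * d w / (1 - Gam * b w))) U (Gam * Md / beta)).
    - apply Rmult_le_pos; [nra| apply Rlt_le, Rinv_0_lt_compat; lra].
    - intros u Hu. specialize (Hden u Hu).
      assert (H1 : derivable_pt_lim (fun w => 1 - b w - d w) u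
         (0 - d u - (Gam * d u / (1 - Gam * b u) * (1 - b u - d u) - d u))).
      { apply (derivable_pt_lim_minus (fun w => 1 - b w) d).
        - apply (derivable_pt_lim_minus (fct_cte 1) b). apply derivable_pt_lim_const. apply Hb; lra.
        - apply Hd; lra. }
      replace (- (Gam * d u / (1 - Gam * b u)) * (1 - b u - d u)) with
         (0 - d u - (Gam * d u / (1 - Gam * b u) * (1 - b u - d u) - d u)) by (field; lra).
      exact H1.
    - intros u Hu. rewrite Rabs_Ropp. apply abs_div_le; auto.
      rewrite Rabs_mult, (Rabs_pos_eq Gam) by lra. apply Rmult_le_compat_l; [lra|]. auto.
    - rewrite Hb0, Hdd0. lra. }
  intros w Hw. specialize (Hdpos w Hw). specialize (Hapos w Hw). lra.
Qed.

Lemma b_le_1 (Gam d0 : R) (b d : R -> R) :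
  0 < Gam < 1 -> 0 < d0 <= 1 -> b 0 = 0 -> d 0 = d0 ->
  (forall u, 0 <= u -> derivable_pt_lim b u (d u)) ->
  (forall u, 0 <= u -> derivable_pt_lim d u (Gam * d u / (1 - Gam * b u) * (1 - b u - d u) - d u)) ->
  forall u, 0 <= u -> b u <= 1.
Proof.
  intros HG Hd0 Hb0 Hdd0 Hb Hd u1 Hu1.
  destruct (Rle_or_lt (b u1) 1) as [H|Hgt]; auto. exfalso.
  set (E := fun v => 0 <= v <= u1 /\ forall w, 0 <= w <= v -> b w <= 1).
  assert (HE0 : E 0). { split; [lra|]. intros w Hw. replace w with 0 by lra. lra. }
  assert (HEb : bound E). { exists u1. intros v [Hv _]. lra. }
  destruct (completeness E HEb (ex_intro _ 0 HE0)) as [s [Hs1 Hs2]].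
  assert (Hs0 : 0 <= s) by (apply Hs1; auto).
  assert (Hsu : s <= u1) by (apply Hs2; intros v [Hv _]; lra).
  assert (Cb : forall c, 0 <= c -> continuity_pt b c) by (intros c Hc; apply der_cont with (d c); apply Hb; lra).
  assert (HA : forall w, 0 <= w < s -> b w <= 1).
  { intros w Hw. destruct (classic (exists v, E v /\ w < v)) as [[v [[_ Hv] Hwv]]|Hno].
    - apply Hv. lra.
    - exfalso. assert (s <= w).
      { apply Hs2. intros v Hv. destruct (Rle_or_lt v w); auto. exfalso. apply Hno. exists v; auto. }
      lra. }
  assert (HB : b s <= 1).
  { destruct (Req_dec s 0) as [->|Hs]; [lra|].
    destruct (Rle_or_lt (b s) 1) as [|Hbs]; auto. exfalso.
    destruct (cont_near b s (b s - 1) (Cb s Hs0) ltac:(lra)) as [alp [Halp Hn]].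
    set (w := Rmax 0 (s - alp / 2)).
    assert (Hw1 : 0 <= w) by apply Rmax_l.
    assert (Hw2 : w < s) by (unfold w; apply Rmax_lub_lt; lra).
    assert (Hw3 : Rabs (w - s) < alp).
    { rewrite Rabs_left by lra. unfold w. pose proof (Rmax_r 0 (s - alp / 2)). lra. }
    specialize (Hn w Hw3). specialize (HA w (conj Hw1 Hw2)).
    apply Rabs_def2 in Hn. lra. }
  assert (Hs_all : forall w, 0 <= w <= s -> b w <= 1).
  { intros w Hw. destruct (Req_dec w s) as [->|]; auto. apply HA. lra. }
  assert (Hsu' : s < u1). { destruct (Req_dec s u1) as [->|]; [lra|lra]. }
  destruct (cont_near b s (1 / Gam - 1) (Cb s Hs0)) as [alp [Halp Hn]].
  { assert (1 < 1 / Gam) by (apply Rmult_lt_reg_r with Gam; [lra|]; unfold Rdiv; rewrite Rmult_assoc, Rinv_l by lra; lra). lra. }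
  set (eta := Rmin (alp / 2) (u1 - s)).
  assert (Heta : 0 < eta) by (unfold eta; apply Rmin_glb_lt; lra).
  assert (Heta1 : eta <= alp / 2) by apply Rmin_l.
  assert (Heta2 : eta <= u1 - s) by apply Rmin_r.
  assert (Hnice : forall w, 0 <= w <= s + eta -> Gam * b w < 1).
  { intros w Hw. destruct (Rle_or_lt w s) as [Hws|Hws].
    - specialize (Hs_all w ltac:(lra)). nra.
    - assert (Rabs (w - s) < alp) by (rewrite Rabs_right by lra; lra).
      specialize (Hn w H). apply Rabs_def2 in Hn.
      assert (b w < 1 / Gam) by lra.
      apply Rmult_lt_reg_r with (/ Gam); [apply Rinv_0_lt_compat; lra|].
      rewrite Rmult_1_l, Rmult_comm, <- Rmult_assoc, Rinv_l, Rmult_1_l by lra.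
      unfold Rdiv in H0. lra. }
  pose proof (nice_interval Gam d0 b d HG Hd0 Hb0 Hdd0 Hb Hd (s + eta) ltac:(lra) Hnice) as Hni.
  assert (E (s + eta)) by (split; [lra|exact Hni]).
  specialize (Hs1 _ H). lra.
Qed.

Lemma step_scal Gam lam alpha sigma N z f a :
  hilt_step Gam lam alpha sigma N (fun s => a * f s) z = a * hilt_step Gam lam alpha sigma N f z.
Proof.
  destruct z as [[[j m] x] y]. rewrite !step_nested.
  apply (nestedE_scal _ _ _ _ _ _ _ _ _ a (fun c R1 K K1 L G => f (newst j m x y c R1 K K1 L G))).
Qed.

Lemma mvt_point (f f' : R -> R) a bb :
  (forall c, a <= c <= bb -> derivable_pt_lim f c (f' c)) ->
  forall u v, a <= u -> u <= v -> v <= bb -> exists xi, u <= xi <= v /\ f v - f u = f' xi * (v - u).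
Proof.
  intros H u v Hu Huv Hv. destruct (Req_dec u v) as [->|Hne].
  - exists v. split; [lra|]. ring.
  - destruct (MVT_cor2 f f' u v ltac:(lra)) as [c [Hc1 Hc2]].
    + intros c Hc. apply H. lra.
    + exists c. split; [lra|]. auto.
Qed.

Lemma mvt_bound (f f' : R -> R) a bb K :
  (forall c, a <= c <= bb -> derivable_pt_lim f c (f' c)) ->
  (forall c, a <= c <= bb -> Rabs (f' c) <= K) ->
  forall u v, a <= u -> u <= v -> v <= bb -> Rabs (f v - f u) <= K * (v - u).
Proof.
  intros H HK u v Hu Huv Hv. destruct (mvt_point f f' a bb H u v Hu Huv Hv) as [xi [Hxi E]].
  rewrite E, Rabs_mult, (Rabs_pos_eq (v - u)) by lra. apply Rmult_le_compat_r; [lra|]. apply HK; lra.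
Qed.

Lemma F0b : Fb 0 0 0 0 0 = 0. Proof. reflexivity. Qed.
Lemma F0d Gam : Fd Gam 0 0 0 0 0 = 0. Proof. unfold Fd, gF. unfold Rdiv. ring. Qed.
Lemma F0x Gam la ls : Fx Gam la ls 0 0 0 0 0 = 0. Proof. unfold Fx, gF. unfold Rdiv. ring. Qed.
Lemma F0y Gam la ls : Fy Gam la ls 0 0 0 0 0 = 0. Proof. unfold Fy, gF. unfold Rdiv. ring. Qed.

Lemma LipP_zero Gam M del F L : LipP Gam M del F L -> F 0 0 0 0 0 = 0 -> 0 <= M -> del <= 1 ->
  forall b d x y h, Rabs b <= M -> Rabs d <= M -> Rabs x <= M -> Rabs y <= M -> Rabs h <= 1 ->
  del <= 1 - h - Gam * b -> Rabs (F b d x y h) <= L * (Rabs b + Rabs d + Rabs x + Rabs y + Rabs h).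
Proof.
  intros HL H0 HM Hdel b d x y h Hb Hd Hx Hy Hh Q.
  assert (HZ : Rabs 0 <= M) by (rewrite Rabs_R0; lra).
  assert (HZ1 : Rabs 0 <= 1) by (rewrite Rabs_R0; lra).
  specialize (HL b d x y h 0 0 0 0 0 Hb Hd Hx Hy Hh HZ HZ HZ HZ HZ1 Q ltac:(lra)).
  cbv zeta in HL. rewrite H0, !Rminus_0_r in HL. exact HL.
Qed.

Lemma dev_gt N z b d x y u eps : dev N z b d x y u > eps ->
  let '(B, D, X, Y) := z in
  Rabs (INR B / INR N - b u) > eps \/ Rabs (INR D / INR N - d u) > eps \/
  Rabs (INR X / INR N - x u) > eps \/ Rabs (INR Y / INR N - y u) > eps.
Proof.
  destruct z as [[[B D] X] Y]. unfold dev. intros H.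
  destruct (Rgt_dec (Rabs (INR B / INR N - b u)) eps); [left; auto|].
  destruct (Rgt_dec (Rabs (INR D / INR N - d u)) eps); [right; left; auto|].
  destruct (Rgt_dec (Rabs (INR X / INR N - x u)) eps); [right; right; left; auto|].
  destruct (Rgt_dec (Rabs (INR Y / INR N - y u)) eps); [right; right; right; auto|].
  exfalso. apply Rnot_gt_le in n, n0, n1, n2.
  assert (Rmax (Rmax (Rabs (INR B / INR N - b u)) (Rabs (INR D / INR N - d u)))
       (Rmax (Rabs (INR X / INR N - x u)) (Rabs (INR Y / INR N - y u))) <= eps).
  { apply Rmax_lub; apply Rmax_lub; auto. }
  lra.
Qed.

Lemma exp_pow a t : exp a ^ t = exp (INR t * a).
Proof.
  induction t.
  - simpl. rewrite Rmult_0_l, exp_0. reflexivity.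
  - rewrite S_INR. simpl pow. rewrite IHt. rewrite <- exp_plus. f_equal. ring.
Qed.

Lemma pow_exp_bound C N t : 0 <= C -> 0 < INR N -> (1 + C / INR N) ^ t <= exp (C * INR t / INR N).
Proof.
  intros HC HN.
  assert (H1 : 1 + C / INR N <= exp (C / INR N)).
  { destruct (Req_dec (C / INR N) 0) as [E|E]; [rewrite E, exp_0; lra|].
    pose proof (exp_ineq1 _ E). lra. }
  assert (H0 : 0 <= C / INR N) by (apply Rmult_le_pos; [lra| apply Rlt_le, Rinv_0_lt_compat; lra]).
  eapply Rle_trans; [apply pow_incr; split; [lra|exact H1]|].
  rewrite exp_pow. right. f_equal. field. lra.
Qed.

Lemma lip_apply Gam M del F L b1 d1 x1 y1 h1 b2 d2 x2 y2 h2 wb wd wx wy r :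
  LipP Gam M del F L -> 0 <= L ->
  Rabs b1 <= M -> Rabs d1 <= M -> Rabs x1 <= M -> Rabs y1 <= M -> Rabs h1 <= 1 ->
  Rabs b2 <= M -> Rabs d2 <= M -> Rabs x2 <= M -> Rabs y2 <= M -> Rabs h2 <= 1 ->
  del <= 1 - h1 - Gam * b1 -> del <= 1 - h2 - Gam * b2 ->
  Rabs (wb - b2) <= r -> Rabs (wd - d2) <= r -> Rabs (wx - x2) <= r -> Rabs (wy - y2) <= r ->
  Rabs (F b1 d1 x1 y1 h1 - F b2 d2 x2 y2 h2) <=
  L * (Rabs (b1 - wb) + Rabs (d1 - wd) + Rabs (x1 - wx) + Rabs (y1 - wy) + 4 * r + Rabs (h1 - h2)).
Proof.
  intros HL HL0 Hb1 Hd1 Hx1 Hy1 Hh1 Hb2 Hd2 Hx2 Hy2 Hh2 Q1 Q2 Rb Rd Rx Ry.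
  specialize (HL b1 d1 x1 y1 h1 b2 d2 x2 y2 h2 Hb1 Hd1 Hx1 Hy1 Hh1 Hb2 Hd2 Hx2 Hy2 Hh2 Q1 Q2). cbv zeta in HL.
  eapply Rle_trans; [exact HL|]. apply Rmult_le_compat_l; [auto|].
  assert (forall a w c, Rabs (a - c) <= Rabs (a - w) + Rabs (w - c)).
  { intros a w c. replace (a - c) with ((a - w) + (w - c)) by ring. apply Rabs_triang. }
  pose proof (H b1 wb b2). pose proof (H d1 wd d2). pose proof (H x1 wx x2). pose proof (H y1 wy y2). lra.
Qed.

Lemma combine eb ed ex ey mb md mx my db dd dx dy L c M1 h :
  0 <= L -> 0 <= c -> 0 < h <= 1 ->
  let E1 := Rabs eb + Rabs ed + Rabs ex + Rabs ey in
  Rabs mb <= L * (E1 + c * h) * h -> Rabs md <= L * (E1 + c * h) * h ->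
  Rabs mx <= L * (E1 + c * h) * h -> Rabs my <= L * (E1 + c * h) * h ->
  Rabs db <= M1 * h -> Rabs dd <= M1 * h -> Rabs dx <= M1 * h -> Rabs dy <= M1 * h ->
  2 * (eb * mb + ed * md + ex * mx + ey * my) + 2 * (db ^ 2 + dd ^ 2 + dx ^ 2 + dy ^ 2) <=
  (eb ^ 2 + ed ^ 2 + ex ^ 2 + ey ^ 2) * ((8 * L + 2 * L * c) * h) + (4 * L * c + 8 * M1 ^ 2) * h ^ 2.
Proof.
  intros HL Hc Hh E1 Hmb Hmd Hmx Hmy Hdb Hdd Hdx Hdy.
  set (S := eb ^ 2 + ed ^ 2 + ex ^ 2 + ey ^ 2).
  set (B := L * (E1 + c * h) * h).
  assert (HE0 : 0 <= E1) by (unfold E1; pose proof (Rabs_pos eb); pose proof (Rabs_pos ed); pose proof (Rabs_pos ex); pose proof (Rabs_pos ey); lra).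
  assert (Hem : forall e m, Rabs m <= B -> e * m <= Rabs e * B).
  { intros e m Hm. eapply Rle_trans; [apply Rle_abs|]. rewrite Rabs_mult. apply Rmult_le_compat_l; auto. apply Rabs_pos. }
  pose proof (Hem eb mb Hmb) as P1. pose proof (Hem ed md Hmd) as P2. pose proof (Hem ex mx Hmx) as P3. pose proof (Hem ey my Hmy) as P4.
  assert (HH1 : 2 * (eb * mb + ed * md + ex * mx + ey * my) <= 2 * E1 * B) by (unfold E1; lra).
  assert (HE2 : E1 ^ 2 <= 4 * S).
  { unfold E1, S. rewrite <- (pow2_abs eb), <- (pow2_abs ed), <- (pow2_abs ex), <- (pow2_abs ey).
    set (a1 := Rabs eb). set (a2 := Rabs ed). set (a3 := Rabs ex). set (a4 := Rabs ey).
    pose proof (pow2_ge_0 (a1 - a2)). pose proof (pow2_ge_0 (a1 - a3)). pose proof (pow2_ge_0 (a1 - a4)).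
    pose proof (pow2_ge_0 (a2 - a3)). pose proof (pow2_ge_0 (a2 - a4)). pose proof (pow2_ge_0 (a3 - a4)). nra. }
  assert (HE1 : E1 <= 2 + S).
  { unfold E1, S.
    assert (Q : forall e, Rabs e <= (1 + e ^ 2) / 2).
    { intros e. rewrite <- (pow2_abs e). pose proof (pow2_ge_0 (Rabs e - 1)). nra. }
    pose proof (Q eb). pose proof (Q ed). pose proof (Q ex). pose proof (Q ey). pose proof (pow2_ge_0 eb). pose proof (pow2_ge_0 ed). pose proof (pow2_ge_0 ex). pose proof (pow2_ge_0 ey). lra. }
  assert (HB : 2 * E1 * B = 2 * L * h * E1 ^ 2 + 2 * L * c * h ^ 2 * E1) by (unfold B; ring).
  assert (HS0 : 0 <= S) by (unfold S; nra).
  assert (HH2 : 2 * L * h * E1 ^ 2 <= 2 * L * h * (4 * S)) by (apply Rmult_le_compat_l; [nra|lra]).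
  assert (H3' : 2 * L * c * h ^ 2 * E1 <= 2 * L * c * h ^ 2 * (2 + S)) by (apply Rmult_le_compat_l; [apply Rmult_le_pos; nra|lra]).
  assert (Hd : 2 * (db ^ 2 + dd ^ 2 + dx ^ 2 + dy ^ 2) <= 8 * M1 ^ 2 * h ^ 2).
  { assert (Q : forall q, Rabs q <= M1 * h -> q ^ 2 <= M1 ^ 2 * h ^ 2).
    { intros q Hq. rewrite <- (pow2_abs q). pose proof (Rabs_pos q).
      replace (M1 ^ 2 * h ^ 2) with ((M1 * h) * (M1 * h)) by ring. simpl. rewrite Rmult_1_r. apply Rmult_le_compat; lra. }
    pose proof (Q db Hdb). pose proof (Q dd Hdd). pose proof (Q dx Hdx). pose proof (Q dy Hdy). lra. }
  assert (Hh2 : 2 * L * c * h ^ 2 * S <= 2 * L * c * h * S).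
  { assert (h ^ 2 <= h) by nra. assert (0 <= 2 * L * c * S) by (apply Rmult_le_pos; [nra|lra]). nra. }
  nra.
Qed.

Lemma comp_bound Gam M del F L b1 d1 x1 y1 hN b2 d2 x2 y2 wb wd wx wy M1 :
  LipP Gam M del F L -> 0 <= L -> 0 < hN <= 1 ->
  Rabs b1 <= M -> Rabs d1 <= M -> Rabs x1 <= M -> Rabs y1 <= M ->
  Rabs b2 <= M -> Rabs d2 <= M -> Rabs x2 <= M -> Rabs y2 <= M ->
  del <= 1 - hN - Gam * b1 -> del <= 1 - 0 - Gam * b2 ->
  Rabs (wb - b2) <= M1 * hN -> Rabs (wd - d2) <= M1 * hN -> Rabs (wx - x2) <= M1 * hN -> Rabs (wy - y2) <= M1 * hN ->
  Rabs (F b1 d1 x1 y1 hN * hN - F b2 d2 x2 y2 0 * hN) <=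
  L * (Rabs (b1 - wb) + Rabs (d1 - wd) + Rabs (x1 - wx) + Rabs (y1 - wy) + (4 * M1 + 1) * hN) * hN.
Proof.
  intros HL HL0 Hh Hb1 Hd1 Hx1 Hy1 Hb2 Hd2 Hx2 Hy2 Q1 Q2 Rb Rd Rx Ry.
  assert (Hh1 : Rabs hN <= 1) by (rewrite Rabs_pos_eq; lra).
  assert (Hh2 : Rabs 0 <= 1) by (rewrite Rabs_R0; lra).
  pose proof (lip_apply Gam M del F L b1 d1 x1 y1 hN b2 d2 x2 y2 0 wb wd wx wy (M1 * hN) HL HL0
    Hb1 Hd1 Hx1 Hy1 Hh1 Hb2 Hd2 Hx2 Hy2 Hh2 Q1 Q2 Rb Rd Rx Ry) as H.
  replace (F b1 d1 x1 y1 hN * hN - F b2 d2 x2 y2 0 * hN) with ((F b1 d1 x1 y1 hN - F b2 d2 x2 y2 0) * hN) by ring.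
  rewrite Rabs_mult, (Rabs_pos_eq hN) by lra. apply Rmult_le_compat_r; [lra|].
  eapply Rle_trans; [exact H|]. right. rewrite Rminus_0_r, (Rabs_pos_eq hN) by lra. ring.
Qed.

Lemma nat_above K : exists N0, forall N, (N >= N0)%nat -> K < INR N.
Proof.
  destruct (archimed (Rabs K)) as [H1 H2].
  exists (Z.to_nat (up (Rabs K))). intros N HN.
  assert (Hz : (0 <= up (Rabs K))%Z).
  { apply le_IZR. pose proof (Rabs_pos K). simpl. lra. }
  apply le_INR in HN. rewrite INR_IZR_INZ, Z2Nat.id in HN by auto.
  pose proof (Rle_abs K). lra.
Qed.

Lemma good_large Gam lam alpha sigma N : params Gam lam alpha sigma ->
  2 <= INR N -> (1 + Gam) / (1 - Gam) <= INR N -> lam * alpha <= INR N -> lam * sigma <= INR N ->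
  good Gam lam alpha sigma N.
Proof.
  intros [HG _] H2 H3 H4 H5. unfold good. repeat split; auto.
  - assert (2 <= N)%nat. { apply INR_le. simpl. lra. } lia.
  - apply Rmult_le_reg_r with (INR N - 1); [lra|]. unfold Rdiv. rewrite Rmult_assoc, Rinv_l by lra.
    assert ((1 + Gam) <= INR N * (1 - Gam)).
    { apply Rmult_le_reg_r with (/ (1 - Gam)); [apply Rinv_0_lt_compat; lra|].
      rewrite Rmult_assoc, Rinv_r by lra. unfold Rdiv in H3. lra. }
    nra.
Qed.

Lemma ntot_le r : 0 <= r -> INR (Z.to_nat (Int_part r)) <= r.
Proof.
  intros Hr. destruct (base_Int_part r) as [H1 H2].
  destruct (Z_le_gt_dec 0 (Int_part r)) as [Hz|Hz].
  - rewrite INR_IZR_INZ, Z2Nat.id by auto. auto.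
  - destruct (Int_part r) eqn:E; try lia. rewrite Z2Nat.inj_neg. simpl. auto.
Qed.

Lemma int_part_nat r t : Int_part r = Z.of_nat t -> INR t <= r < INR t + 1.
Proof.
  intros H. destruct (base_Int_part r) as [H1 H2]. rewrite H, <- INR_IZR_INZ in H1, H2. lra.
Qed.

Theorem theorem4
  (Gam lam alpha sigma : R)
  (hGam : 0 < Gam < 1) (hlam : 0 < lam) (halpha : 0 <= alpha) (hsigma : 0 <= sigma)
  (d0 x0 y0 : R)
  (hd0 : 0 < d0 <= 1) (hx0 : 0 <= x0 <= d0) (hy0 : 0 <= y0 <= 1 - d0)
  (D0 X0 Y0 : nat -> nat)
  (hD0 : forall N, (D0 N <= N)%nat)
  (hX0 : forall N, (X0 N <= D0 N)%nat)
  (hY0 : forall N, (Y0 N <= N - D0 N)%nat)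
  (cD0 : Un_cv (fun N => INR (D0 N) / INR N) d0)
  (cX0 : Un_cv (fun N => INR (X0 N) / INR N) x0)
  (cY0 : Un_cv (fun N => INR (Y0 N) / INR N) y0)
  (b d x y : R -> R)
  (ib : b 0 = 0) (id0 : d 0 = d0) (ix : x 0 = x0) (iy : y 0 = y0)
  (odeb : forall u, 0 <= u -> derivable_pt_lim b u (d u))
  (oded : forall u, 0 <= u -> derivable_pt_lim d u
     (Gam * d u / (1 - Gam * b u) * (1 - b u - d u) - d u))
  (odex : forall u, 0 <= u -> derivable_pt_lim x u
     (lam * alpha * (x u + y u) * ((b u + d u) - x u)
      + Gam * d u / (1 - Gam * b u) * y u))
  (odey : forall u, 0 <= u -> derivable_pt_lim y u
     (lam * sigma * (x u + y u) * (1 - (b u + d u) - y u)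
      - Gam * d u / (1 - Gam * b u) * y u)) :
  forall T eps : R, 0 < T -> 0 < eps ->
    Un_cv (fun N => dev_prob Gam lam alpha sigma N (D0 N) (X0 N) (Y0 N) T eps b d x y) 0.
Proof.
  intros T eps HT Heps.
  assert (Hpar : params Gam lam alpha sigma) by (unfold params; repeat split; lra).
  pose proof (b_le_1 Gam d0 b d hGam hd0 ib id0 odeb oded) as Hb1.
  set (U := T + 1).
  assert (HU : 0 <= U) by (unfold U; lra).
  assert (Db : forall u, 0 <= u -> derivable_pt_lim b u (Fb (b u) (d u) (x u) (y u) 0)) by (intros; unfold Fb; auto).
  assert (Dd : forall u, 0 <= u -> derivable_pt_lim d u (Fd Gam (b u) (d u) (x u) (y u) 0)).
  { intros u Hu. replace (Fd Gam (b u) (d u) (x u) (y u) 0) with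
      (Gam * d u / (1 - Gam * b u) * (1 - b u - d u) - d u) by (unfold Fd, gF; rewrite Rminus_0_r; ring). auto. }
  assert (Dx : forall u, 0 <= u -> derivable_pt_lim x u (Fx Gam (lam * alpha) (lam * sigma) (b u) (d u) (x u) (y u) 0)).
  { intros u Hu. replace (Fx Gam (lam * alpha) (lam * sigma) (b u) (d u) (x u) (y u) 0) with
      (lam * alpha * (x u + y u) * ((b u + d u) - x u) + Gam * d u / (1 - Gam * b u) * y u)
      by (unfold Fx, gF; rewrite Rminus_0_r; ring). auto. }
  assert (Dy : forall u, 0 <= u -> derivable_pt_lim y u (Fy Gam (lam * alpha) (lam * sigma) (b u) (d u) (x u) (y u) 0)).
  { intros u Hu. replace (Fy Gam (lam * alpha) (lam * sigma) (b u) (d u) (x u) (y u) 0) with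
      (lam * sigma * (x u + y u) * (1 - (b u + d u) - y u) - Gam * d u / (1 - Gam * b u) * y u)
      by (unfold Fy, gF; rewrite Rminus_0_r; ring). auto. }
  destruct (cont_bound b 0 U HU) as [Mb [HMb0 HMb]]; [intros c Hc; eapply der_cont; apply Db; lra|].
  destruct (cont_bound d 0 U HU) as [Md [HMd0 HMd]]; [intros c Hc; eapply der_cont; apply Dd; lra|].
  destruct (cont_bound x 0 U HU) as [Mx [HMx0 HMx]]; [intros c Hc; eapply der_cont; apply Dx; lra|].
  destruct (cont_bound y 0 U HU) as [My [HMy0 HMy]]; [intros c Hc; eapply der_cont; apply Dy; lra|].
  set (M := 1 + Mb + Md + Mx + My).
  assert (HM1 : 1 <= M) by (unfold M; lra).
  set (del := (1 - Gam) / 4).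
  assert (Hdel : 0 < del) by (unfold del; lra).
  destruct (F_lip_all Gam (lam * alpha) (lam * sigma) M del hGam Hdel) as [L [HL0 [LFb [LFd [LFx LFy]]]]].
  assert (Zb : forall u, 0 <= u <= U -> Rabs (b u) <= M) by (intros u Hu; specialize (HMb u Hu); unfold M; lra).
  assert (Zd : forall u, 0 <= u <= U -> Rabs (d u) <= M) by (intros u Hu; specialize (HMd u Hu); unfold M; lra).
  assert (Zx : forall u, 0 <= u <= U -> Rabs (x u) <= M) by (intros u Hu; specialize (HMx u Hu); unfold M; lra).
  assert (Zy : forall u, 0 <= u <= U -> Rabs (y u) <= M) by (intros u Hu; specialize (HMy u Hu); unfold M; lra).
  assert (Z0 : Rabs 0 <= 1) by (rewrite Rabs_R0; lra).
  assert (Zden : forall u, 0 <= u <= U -> del <= 1 - 0 - Gam * b u).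
  { intros u Hu. specialize (Hb1 u ltac:(lra)). unfold del. nra. }
  set (M1 := L * (4 * M)).
  assert (HM10 : 0 <= M1) by (unfold M1; nra).
  assert (Fbnd : forall F, LipP Gam M del F L -> F 0 0 0 0 0 = 0 ->
     forall u, 0 <= u <= U -> Rabs (F (b u) (d u) (x u) (y u) 0) <= M1).
  { intros F HF HF0 u Hu.
    eapply Rle_trans; [apply (LipP_zero Gam M del F L HF HF0); auto; try lra; unfold del; lra|].
    rewrite Rabs_R0. unfold M1. apply Rmult_le_compat_l; auto.
    pose proof (Zb u Hu). pose proof (Zd u Hu). pose proof (Zx u Hu). pose proof (Zy u Hu). lra. }
  assert (Tb : forall u v, 0 <= u -> u <= v -> v <= U -> Rabs (b v - b u) <= M1 * (v - u)).
  { apply (mvt_bound b (fun u => Fb (b u) (d u) (x u) (y u) 0) 0 U).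
    - intros; apply Db; lra.
    - intros. apply Fbnd; auto. }
  assert (Td : forall u v, 0 <= u -> u <= v -> v <= U -> Rabs (d v - d u) <= M1 * (v - u)).
  { apply (mvt_bound d (fun u => Fd Gam (b u) (d u) (x u) (y u) 0) 0 U).
    - intros; apply Dd; lra.
    - intros. apply (Fbnd (Fd Gam)); auto. apply F0d. }
  assert (Tx : forall u v, 0 <= u -> u <= v -> v <= U -> Rabs (x v - x u) <= M1 * (v - u)).
  { apply (mvt_bound x (fun u => Fx Gam (lam * alpha) (lam * sigma) (b u) (d u) (x u) (y u) 0) 0 U).
    - intros; apply Dx; lra.
    - intros. apply (Fbnd (Fx Gam (lam * alpha) (lam * sigma))); auto. apply F0x. }
  assert (Ty : forall u v, 0 <= u -> u <= v -> v <= U -> Rabs (y v - y u) <= M1 * (v - u)).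
  { apply (mvt_bound y (fun u => Fy Gam (lam * alpha) (lam * sigma) (b u) (d u) (x u) (y u) 0) 0 U).
    - intros; apply Dy; lra.
    - intros. apply (Fbnd (Fy Gam (lam * alpha) (lam * sigma))); auto. apply F0y. }
  set (c0 := 4 * M1 + 1).
  set (C := 8 * L + 2 * L * c0).
  set (C' := 4 * L * c0 + 8 * M1 ^ 2 + 16 * Cq Gam lam alpha sigma).
  assert (Hc0 : 0 <= c0) by (unfold c0; lra).
  assert (HC : 0 <= C) by (unfold C; nra).
  assert (HS : forall (N t j m xx yy : nat), good Gam lam alpha sigma N -> / INR N <= (1 - Gam) / 2 ->
     Inv N (j, m, xx, yy) -> INR t < INR N * T ->
     hilt_step Gam lam alpha sigma N
       (fun s => Sdev N s (b (INR (S t) / INR N)) (d (INR (S t) / INR N)) (x (INR (S t) / INR N)) (y (INR (S t) / INR N)))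
       (j, m, xx, yy)
     <= Sdev N (j, m, xx, yy) (b (INR t / INR N)) (d (INR t / INR N)) (x (INR t / INR N)) (y (INR t / INR N))
        * (1 + C / INR N) + C' / INR N ^ 2).
  { intros N t j m xx yy Hg Hh HI Ht.
    pose proof (good_N _ _ _ _ _ Hg) as HN.
    assert (Hh0 : 0 < / INR N) by (apply Rinv_0_lt_compat; lra).
    assert (Hh1 : / INR N <= 1) by lra.
    set (u0 := INR t / INR N). set (u1 := INR (S t) / INR N).
    assert (Hu0 : 0 <= u0) by (unfold u0; apply Rmult_le_pos; [apply pos_INR|lra]).
    assert (Hu0T : u0 < T).
    { unfold u0. apply Rmult_lt_reg_r with (INR N); [lra|]. unfold Rdiv. rewrite Rmult_assoc, Rinv_l by lra. lra. }
    assert (Hu1 : u1 = u0 + / INR N) by (unfold u1, u0; rewrite S_INR; field; lra).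
    assert (Hu1U : u1 <= U) by (unfold U; lra).
    eapply Rle_trans; [apply (drift Gam lam alpha sigma N j m xx yy (b u0) (d u0) (x u0) (y u0)); auto|].
    destruct (mvt_point b (fun u => Fb (b u) (d u) (x u) (y u) 0) 0 U ltac:(intros; apply Db; lra) u0 u1 Hu0 ltac:(lra) Hu1U) as [xib [Hxib Eb]].
    destruct (mvt_point d (fun u => Fd Gam (b u) (d u) (x u) (y u) 0) 0 U ltac:(intros; apply Dd; lra) u0 u1 Hu0 ltac:(lra) Hu1U) as [xid [Hxid Ed]].
    destruct (mvt_point x (fun u => Fx Gam (lam * alpha) (lam * sigma) (b u) (d u) (x u) (y u) 0) 0 U ltac:(intros; apply Dx; lra) u0 u1 Hu0 ltac:(lra) Hu1U) as [xix [Hxix Ex]].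
    destruct (mvt_point y (fun u => Fy Gam (lam * alpha) (lam * sigma) (b u) (d u) (x u) (y u) 0) 0 U ltac:(intros; apply Dy; lra) u0 u1 Hu0 ltac:(lra) Hu1U) as [xiy [Hxiy Ey]].
    simpl in HI.
    assert (HNpos : 0 < INR N) by lra.
    assert (Sc : forall k, (k <= N)%nat -> Rabs (INR k / INR N) <= M).
    { intros k Hk. rewrite Rabs_pos_eq by (apply Rmult_le_pos; [apply pos_INR| apply Rlt_le, Rinv_0_lt_compat; lra]).
      apply le_INR in Hk. assert (INR k / INR N <= 1).
      { apply Rmult_le_reg_r with (INR N); [lra|]. unfold Rdiv. rewrite Rmult_assoc, Rinv_l by lra. lra. }
      lra. }
    assert (Sb : Rabs (INR j / INR N) <= M) by (apply Sc; lia).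
    assert (Sd : Rabs (INR m / INR N) <= M) by (apply Sc; lia).
    assert (Sx : Rabs (INR xx / INR N) <= M) by (apply Sc; lia).
    assert (Sy : Rabs (INR yy / INR N) <= M) by (apply Sc; lia).
    assert (Sh : Rabs (/ INR N) <= 1) by (rewrite Rabs_pos_eq by lra; lra).
    assert (Sden : del <= 1 - / INR N - Gam * (INR j / INR N)).
    { assert (INR j / INR N <= 1).
      { apply Rmult_le_reg_r with (INR N); [lra|]. unfold Rdiv. rewrite Rmult_assoc, Rinv_l by lra.
        rewrite Rmult_1_r, Rmult_1_l. apply le_INR. lia. }
      assert (0 <= INR j / INR N) by (apply Rmult_le_pos; [apply pos_INR| apply Rlt_le, Rinv_0_lt_compat; lra]).
      unfold del. destruct hGam. nra. }
    assert (Hxu : forall xi, u0 <= xi <= u1 -> 0 <= xi <= U) by (intros; lra).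
    assert (Rw : forall xi, u0 <= xi <= u1 ->
       Rabs (b u0 - b xi) <= M1 * / INR N /\ Rabs (d u0 - d xi) <= M1 * / INR N /\
       Rabs (x u0 - x xi) <= M1 * / INR N /\ Rabs (y u0 - y xi) <= M1 * / INR N).
    { intros xi Hxi. rewrite Hu1 in Hxi.
      assert (M1 * (xi - u0) <= M1 * / INR N) by (apply Rmult_le_compat_l; [exact HM10|lra]).
      rewrite (Rabs_minus_sym (b u0)), (Rabs_minus_sym (d u0)), (Rabs_minus_sym (x u0)), (Rabs_minus_sym (y u0)).
      pose proof (Tb u0 xi Hu0 ltac:(lra) ltac:(lra)).
      pose proof (Td u0 xi Hu0 ltac:(lra) ltac:(lra)).
      pose proof (Tx u0 xi Hu0 ltac:(lra) ltac:(lra)).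
      pose proof (Ty u0 xi Hu0 ltac:(lra) ltac:(lra)).
      repeat split; lra. }
    set (E1 := Rabs (INR j / INR N - b u0) + Rabs (INR m / INR N - d u0) + Rabs (INR xx / INR N - x u0) + Rabs (INR yy / INR N - y u0)).
    assert (Hdu : u1 - u0 = / INR N) by lra.
    assert (Hhh : 0 < / INR N <= 1) by lra.
    assert (Kb : Rabs (Fb (INR j / INR N) (INR m / INR N) (INR xx / INR N) (INR yy / INR N) (/ INR N) / INR N - (b u1 - b u0))
              <= L * (E1 + c0 * / INR N) * / INR N).
    { rewrite Eb, Hdu. destruct (Rw xib Hxib) as [R1 [R2 [R3 R4]]].
      unfold E1, c0. apply (comp_bound Gam M del Fb L); auto;
        try apply Zb; try apply Zd; try apply Zx; try apply Zy; try apply Zden; lra. }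
    assert (Kd : Rabs (Fd Gam (INR j / INR N) (INR m / INR N) (INR xx / INR N) (INR yy / INR N) (/ INR N) / INR N - (d u1 - d u0))
              <= L * (E1 + c0 * / INR N) * / INR N).
    { rewrite Ed, Hdu. destruct (Rw xid Hxid) as [R1 [R2 [R3 R4]]].
      unfold E1, c0. apply (comp_bound Gam M del (Fd Gam) L); auto;
        try apply Zb; try apply Zd; try apply Zx; try apply Zy; try apply Zden; lra. }
    assert (Kx : Rabs (Fx Gam (lam * alpha) (lam * sigma) (INR j / INR N) (INR m / INR N) (INR xx / INR N) (INR yy / INR N) (/ INR N) / INR N - (x u1 - x u0))
              <= L * (E1 + c0 * / INR N) * / INR N).
    { rewrite Ex, Hdu. destruct (Rw xix Hxix) as [R1 [R2 [R3 R4]]].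
      unfold E1, c0. apply (comp_bound Gam M del (Fx Gam (lam * alpha) (lam * sigma)) L); auto;
        try apply Zb; try apply Zd; try apply Zx; try apply Zy; try apply Zden; lra. }
    assert (Ky : Rabs (Fy Gam (lam * alpha) (lam * sigma) (INR j / INR N) (INR m / INR N) (INR xx / INR N) (INR yy / INR N) (/ INR N) / INR N - (y u1 - y u0))
              <= L * (E1 + c0 * / INR N) * / INR N).
    { rewrite Ey, Hdu. destruct (Rw xiy Hxiy) as [R1 [R2 [R3 R4]]].
      unfold E1, c0. apply (comp_bound Gam M del (Fy Gam (lam * alpha) (lam * sigma)) L); auto;
        try apply Zb; try apply Zd; try apply Zx; try apply Zy; try apply Zden; lra. }
    assert (Hu0u1 : u0 <= u1 <= u1) by lra.
    destruct (Rw u1 Hu0u1) as [W1 [W2 [W3 W4]]].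
    rewrite Rabs_minus_sym in W1, W2, W3, W4.
    pose proof (combine _ _ _ _ _ _ _ _ _ _ _ _ L c0 M1 (/ INR N) HL0 Hc0 Hhh Kb Kd Kx Ky W1 W2 W3 W4) as HCB.
    unfold Sdev.
    assert (EC : forall S, S * (1 + C / INR N) = S + S * ((8 * L + 2 * L * c0) * / INR N)) by (intros; unfold C; field; lra).
    assert (EC' : C' / INR N ^ 2 = (4 * L * c0 + 8 * M1 ^ 2) * (/ INR N) ^ 2 + 16 / INR N ^ 2 * Cq Gam lam alpha sigma)
      by (unfold C'; field; lra).
    rewrite EC, EC'.
    lra. }
  set (beta0 := 4 * exp (C * T) / eps ^ 2).
  assert (Hbeta0 : 0 < beta0) by (unfold beta0; apply Rdiv_lt_0_compat; [pose proof (exp_pos (C * T)); lra| nra]).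
  assert (HCq : 0 <= Cq Gam lam alpha sigma).
  { unfold Cq. pose proof (kp_pos _ _ _ _ Hpar). assert (0 <= lam * alpha) by nra. assert (0 <= lam * sigma) by nra. nra. }
  assert (HC' : 0 <= C') by (unfold C'; nra).
  intros eps' Heps'.
  set (r := Rmin 1 (eps' / (6 * beta0 + 1))).
  assert (Hr : 0 < r) by (unfold r; apply Rmin_glb_lt; [lra| apply Rdiv_lt_0_compat; lra]).
  assert (Hr1 : r <= 1) by apply Rmin_l.
  assert (Hr2 : r <= eps' / (6 * beta0 + 1)) by apply Rmin_r.
  destruct (cD0 r Hr) as [Nd HNd].
  destruct (cX0 r Hr) as [Nx HNx].
  destruct (cY0 r Hr) as [Ny HNy].
  destruct (nat_above (2 + (1 + Gam) / (1 - Gam) + lam * alpha + lam * sigma + 2 / (1 - Gam) + 2 * M1 / eps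
      + 4 * beta0 * C' * T / eps')) as [N2 HN2].
  exists (max N2 (max Nd (max Nx Ny))).
  intros N HN.
  specialize (HN2 N ltac:(lia)).
  specialize (HNd N ltac:(lia)). specialize (HNx N ltac:(lia)). specialize (HNy N ltac:(lia)).
  assert (Hpos1 : 0 <= (1 + Gam) / (1 - Gam)) by (apply Rmult_le_pos; [lra| apply Rlt_le, Rinv_0_lt_compat; lra]).
  assert (Hpos2 : 0 <= 2 / (1 - Gam)) by (apply Rmult_le_pos; [lra| apply Rlt_le, Rinv_0_lt_compat; lra]).
  assert (Hpos3 : 0 <= 2 * M1 / eps) by (apply Rmult_le_pos; [lra| apply Rlt_le, Rinv_0_lt_compat; lra]).
  assert (Hpos4 : 0 <= 4 * beta0 * C' * T / eps') by (apply Rmult_le_pos; [apply Rmult_le_pos; [nra|lra]| apply Rlt_le, Rinv_0_lt_compat; lra]).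
  assert (Hla : 0 <= lam * alpha) by nra. assert (Hls : 0 <= lam * sigma) by nra.
  assert (HNR2 : 2 <= INR N) by lra.
  assert (HNpos : 0 < INR N) by lra.
  assert (Hgood : good Gam lam alpha sigma N) by (apply good_large; auto; lra).
  assert (Hh : / INR N <= (1 - Gam) / 2).
  { assert (2 / (1 - Gam) <= INR N) by lra.
    apply Rmult_le_reg_r with (INR N * (2 / (1 - Gam))); [apply Rmult_lt_0_compat; [lra| apply Rdiv_lt_0_compat; lra]|].
    replace (/ INR N * (INR N * (2 / (1 - Gam)))) with (2 / (1 - Gam)) by (field; lra).
    replace ((1 - Gam) / 2 * (INR N * (2 / (1 - Gam)))) with (INR N) by (field; lra). lra. }
  assert (HM1N : M1 * / INR N <= eps / 2).
  { assert (2 * M1 / eps <= INR N) by lra.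
    apply Rmult_le_reg_r with (2 * INR N / eps); [apply Rdiv_lt_0_compat; lra|].
    replace (M1 * / INR N * (2 * INR N / eps)) with (2 * M1 / eps) by (field; lra).
    replace (eps / 2 * (2 * INR N / eps)) with (INR N) by (field; lra). lra. }
  assert (Hfin : beta0 * C' * T / INR N <= eps' / 4).
  { assert (4 * beta0 * C' * T / eps' <= INR N) by lra.
    apply Rmult_le_reg_r with (4 * INR N / eps'); [apply Rdiv_lt_0_compat; lra|].
    replace (beta0 * C' * T / INR N * (4 * INR N / eps')) with (4 * beta0 * C' * T / eps') by (field; lra).
    replace (eps' / 4 * (4 * INR N / eps')) with (INR N) by (field; lra). lra. }
  set (q := 1 + C / INR N).
  assert (Hq1 : 1 <= q) by (unfold q; assert (0 <= C / INR N) by (apply Rmult_le_pos; [lra| apply Rlt_le, Rinv_0_lt_compat; lra]); lra).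
  set (W := fun (t : nat) (z : state) => beta0 * / q ^ t *
     Sdev N z (b (INR t / INR N)) (d (INR t / INR N)) (x (INR t / INR N)) (y (INR t / INR N))).
  set (ntot := Z.to_nat (Int_part (INR N * T))).
  set (eta := beta0 * C' / INR N ^ 2).
  assert (HntotT : INR ntot <= INR N * T) by (apply ntot_le; nra).
  assert (Sdev_pos : forall z wb wd wx wy, 0 <= Sdev N z wb wd wx wy).
  { intros [[[B D] X] Y] wb wd wx wy. unfold Sdev.
    pose proof (pow2_ge_0 (INR B / INR N - wb)). pose proof (pow2_ge_0 (INR D / INR N - wd)).
    pose proof (pow2_ge_0 (INR X / INR N - wx)). pose proof (pow2_ge_0 (INR Y / INR N - wy)). lra. }
  assert (Hqt : forall t, 0 < / q ^ t <= 1).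
  { intros t. pose proof (pow_R1_Rle q t Hq1). split; [apply Rinv_0_lt_compat; lra|].
    rewrite <- Rinv_1. apply Rinv_le_contravar; lra. }
  assert (HW0 : forall t z, Inv N z -> 0 <= W t z).
  { intros t z _. unfold W. pose proof (Hqt t). pose proof (Sdev_pos z (b (INR t / INR N)) (d (INR t / INR N)) (x (INR t / INR N)) (y (INR t / INR N))).
    apply Rmult_le_pos; [|auto]. apply Rmult_le_pos; lra. }
  assert (Hbad : forall t z, Inv N z -> bad_at N T eps b d x y t z -> 1 <= W t z).
  { intros t z HI [u [Hu [Hint Hdev]]].
    destruct (int_part_nat _ _ Hint) as [Hi1 Hi2].
    set (u0 := INR t / INR N).
    assert (Hu0 : 0 <= u0) by (unfold u0; apply Rmult_le_pos; [apply pos_INR| apply Rlt_le, Rinv_0_lt_compat; lra]).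
    assert (Hu0u : u0 <= u).
    { unfold u0. apply Rmult_le_reg_r with (INR N); [lra|]. unfold Rdiv. rewrite Rmult_assoc, Rinv_l by lra. lra. }
    assert (Huu0 : u - u0 <= / INR N).
    { unfold u0. apply Rmult_le_reg_r with (INR N); [lra|].
      replace ((u - INR t / INR N) * INR N) with (INR N * u - INR t) by (field; lra).
      rewrite Rinv_l by lra. lra. }
    assert (HuU : u <= U) by (unfold U; lra).
    assert (Hclose : M1 * (u - u0) <= eps / 2).
    { assert (M1 * (u - u0) <= M1 * / INR N) by (apply Rmult_le_compat_l; lra). lra. }
    pose proof (Tb u0 u Hu0 Hu0u HuU). pose proof (Td u0 u Hu0 Hu0u HuU).
    pose proof (Tx u0 u Hu0 Hu0u HuU). pose proof (Ty u0 u Hu0 Hu0u HuU).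
    assert (HS4 : eps ^ 2 / 4 <= Sdev N z (b u0) (d u0) (x u0) (y u0)).
    { pose proof (dev_gt N z b d x y u eps Hdev) as Hg.
      destruct z as [[[B D] X] Y]. unfold Sdev.
      assert (key : forall s w w0, Rabs (s - w) > eps -> Rabs (w - w0) <= eps / 2 -> eps ^ 2 / 4 <= (s - w0) ^ 2).
      { intros s w w0 K1 K2.
        assert (K3 : Rabs (s - w0) >= eps / 2).
        { replace (s - w) with ((s - w0) + - (w - w0)) in K1 by ring.
          pose proof (Rabs_triang (s - w0) (- (w - w0))) as K4. rewrite Rabs_Ropp in K4. lra. }
        rewrite <- (pow2_abs (s - w0)).
        pose proof (Rmult_le_compat (eps/2) (Rabs (s-w0)) (eps/2) (Rabs (s-w0)) ltac:(lra) ltac:(lra) ltac:(lra) ltac:(lra)).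
        simpl. lra. }
      pose proof (pow2_ge_0 (INR B / INR N - b u0)). pose proof (pow2_ge_0 (INR D / INR N - d u0)).
      pose proof (pow2_ge_0 (INR X / INR N - x u0)). pose proof (pow2_ge_0 (INR Y / INR N - y u0)).
      destruct Hg as [Hg|[Hg|[Hg|Hg]]].
      - pose proof (key _ _ (b u0) Hg ltac:(lra)). lra.
      - pose proof (key _ _ (d u0) Hg ltac:(lra)). lra.
      - pose proof (key _ _ (x u0) Hg ltac:(lra)). lra.
      - pose proof (key _ _ (y u0) Hg ltac:(lra)). lra. }
    assert (Hqexp : q ^ t <= exp (C * T)).
    { eapply Rle_trans; [apply pow_exp_bound; lra|].
      assert (K5 : C * INR t / INR N <= C * T).
      { replace (C * INR t / INR N) with (C * u0) by (unfold u0; field; lra). apply Rmult_le_compat_l; lra. }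
      destruct (Rle_lt_or_eq_dec _ _ K5) as [Hlt|Heq]; [left; apply exp_increasing; auto| rewrite Heq; lra]. }
    pose proof (pow_lt q t ltac:(lra)) as Hqp.
    unfold W. fold u0.
    assert (K6 : beta0 * / q ^ t >= 4 / eps ^ 2).
    { unfold beta0. apply Rle_ge.
      apply Rmult_le_reg_r with (q ^ t); [lra|]. rewrite Rmult_assoc, Rinv_l by lra.
      assert (0 < eps ^ 2) by nra.
      replace (4 * exp (C * T) / eps ^ 2 * 1) with (4 / eps ^ 2 * exp (C * T)) by (field; lra).
      apply Rmult_le_compat_l; [apply Rlt_le, Rdiv_lt_0_compat; lra| lra]. }
    assert (0 < eps ^ 2) by nra.
    assert (4 / eps ^ 2 * (eps ^ 2 / 4) = 1) by (field; lra).
    assert (0 <= eps ^ 2 / 4) by lra.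
    pose proof (Rmult_le_compat (4 / eps ^ 2) (beta0 * / q ^ t) (eps ^ 2 / 4) (Sdev N z (b u0) (d u0) (x u0) (y u0))
      ltac:(apply Rlt_le, Rdiv_lt_0_compat; lra) ltac:(lra) ltac:(lra) HS4). lra. }
  assert (Hdr : forall t z, Inv N z -> (t < ntot)%nat ->
      hilt_step Gam lam alpha sigma N (W (S t)) z <= W t z + eta).
  { intros t [[[j m] xx] yy] HI Ht.
    assert (Ht' : INR t < INR N * T).
    { apply lt_INR in Ht. lra. }
    unfold W. rewrite step_scal.
    pose proof (HS N t j m xx yy Hgood Hh HI Ht') as HS1.
    pose proof (Hqt (S t)) as [Hq0 Hq1'].
    pose proof (pow_lt q t ltac:(lra)) as Hqp.
    eapply Rle_trans; [apply Rmult_le_compat_l; [apply Rmult_le_pos; lra| exact HS1]|].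
    set (SS := Sdev N (j, m, xx, yy) (b (INR t / INR N)) (d (INR t / INR N)) (x (INR t / INR N)) (y (INR t / INR N))).
    fold q.
    assert (E1 : beta0 * / q ^ S t * (SS * q) = beta0 * / q ^ t * SS).
    { simpl pow. field. split; lra. }
    assert (E2 : beta0 * / q ^ S t * (C' / INR N ^ 2) <= eta).
    { unfold eta. replace (beta0 * C' / INR N ^ 2) with (1 * (beta0 * (C' / INR N ^ 2))) by (field; lra).
      replace (beta0 * / q ^ S t * (C' / INR N ^ 2)) with (/ q ^ S t * (beta0 * (C' / INR N ^ 2))) by ring.
      apply Rmult_le_compat_r; [|lra]. apply Rmult_le_pos; [lra|]. apply Rmult_le_pos; [lra|].
      apply Rlt_le, Rinv_0_lt_compat. nra. }
    rewrite Rmult_plus_distr_l, E1. lra. }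
  assert (Heta : 0 <= eta) by (unfold eta; apply Rmult_le_pos; [nra| apply Rlt_le, Rinv_0_lt_compat; nra]).
  assert (HI0 : Inv N (0%nat, D0 N, X0 N, Y0 N)) by (simpl; repeat split; auto; lia).
  destruct (hit_bound (hilt_step Gam lam alpha sigma N) (bad_at N T eps b d x y) (Inv N) W eta ntot
     (fun f g z Hz Hfg => step_le Gam lam alpha sigma N z f g Hpar Hgood Hz Hfg)
     (fun f a z => step_plus_const Gam lam alpha sigma N z f a)
     (fun a z => step_const Gam lam alpha sigma N z a)
     Hbad HW0 Hdr Heta ntot 0 (0%nat, D0 N, X0 N, Y0 N) HI0 ltac:(lia)) as [Hlo Hhi].
  unfold R_dist, dev_prob. fold ntot. rewrite Rminus_0_r, Rabs_pos_eq by exact Hlo.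
  eapply Rle_lt_trans; [exact Hhi|].
  unfold W. simpl pow. rewrite Rinv_1, Rmult_1_r.
  replace (INR 0 / INR N) with 0 by (simpl; field; lra).
  unfold Sdev. rewrite ib, id0, ix, iy.
  unfold R_dist in HNd, HNx, HNy.
  assert (Hsq : forall a, Rabs a < r -> a ^ 2 <= r).
  { intros a Ha. rewrite <- (pow2_abs a). pose proof (Rabs_pos a). simpl. nra. }
  pose proof (Hsq _ HNd). pose proof (Hsq _ HNx). pose proof (Hsq _ HNy).
  replace (INR 0 / INR N - 0) with 0 by (simpl; field; lra).
  assert (Hterm : INR ntot * eta <= beta0 * C' * T / INR N).
  { unfold eta. replace (beta0 * C' * T / INR N) with ((INR N * T) * (beta0 * C' / INR N ^ 2)) by (field; lra).
    apply Rmult_le_compat_r; [|auto]. apply Rmult_le_pos; [nra| apply Rlt_le, Rinv_0_lt_compat; nra]. }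
  assert (Hb3 : beta0 * (3 * r) < eps' / 2).
  { assert (beta0 * (3 * r) <= beta0 * (3 * (eps' / (6 * beta0 + 1)))) by (apply Rmult_le_compat_l; lra).
    assert (beta0 * (3 * (eps' / (6 * beta0 + 1))) < eps' / 2).
    { apply Rmult_lt_reg_r with (6 * beta0 + 1); [lra|].
      replace (beta0 * (3 * (eps' / (6 * beta0 + 1))) * (6 * beta0 + 1)) with (3 * beta0 * eps') by (field; lra).
      nra. }
    lra. }
  assert (Hsum : beta0 * (0 ^ 2 + (INR (D0 N) / INR N - d0) ^ 2 + (INR (X0 N) / INR N - x0) ^ 2 + (INR (Y0 N) / INR N - y0) ^ 2)
           <= beta0 * (3 * r)).
  { apply Rmult_le_compat_l; [lra|]. simpl (0 ^ 2). lra. }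
  lra.
Qed.
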